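(* Let $\mathcal{A}$ be a Banach algebra with a bounded approximate identity and let $X$ be a Banach $\mathcal{A}$-bimodule. Let $X_1$ be the closed linear span of $\{a\cdot x\cdot b: a,b\in\mathcal{A},x\in X\}$ in $X$. Then for every $n\ge1$, $\mathcal{H}^n_{app}(\mathcal{A},X^* )\cong\mathcal{H}^n_{app}(\mathcal{A},X_1^* )$.
   Context: For a Banach $\mathcal{A}$-bimodule $X$, the dual $X^*$ is a Banach $\mathcal{A}$-bimodule via $\langle x,a\cdot\varphi\rangle=\langle x\cdot a,\varphi\rangle$, $\langle x,\varphi\cdot a\rangle=\langle a\cdot x,\varphi\rangle$. For a Banach $\mathcal{A}$-bimodule $Z$, $\mathcal{BL}^n(\mathcal{A},Z)$ ($n\ge1$) is the space of bounded $n$-linear maps $\mathcal{A}^n\to Z$, $\mathcal{BL}^0(\mathcal{A},Z)=Z$, with Hochschild coboundary $(\delta^nT)(a_1,\dots,a_{n+1})=a_1\cdot T(a_2,\dots,a_{n+1})+\sum_{k=1}^n(-1)^kT(a_1,\dots,a_ka_{k+1},\dots,a_{n+1})+(-1)^{n+1}T(a_1,\dots,a_n)\cdot a_{n+1}$ and $\delta^0(z)(a)=a\cdot z-z\cdot a$. $\mathcal{Z}^n(\mathcal{A},Z)=\ker\delta^n$, $\mathcal{B}^n(\mathcal{A},Z)=\operatorname{ran}\delta^{n-1}$. Strong topology: $T_i\to T$ iff $\|(T_i-T)(a_1,\dots,a_n)\|\to0$ for all $a_j\in\mathcal{A}$. $\mathcal{H}^n_{app}(\mathcal{A},Z)=\mathcal{Z}^n(\mathcal{A},Z)/\overline{\mathcal{B}^n(\mathcal{A},Z)}^{\mathrm{strong}}$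 for $n\ge1$. *)

(* Defs.v *)
From Stdlib Require Import Reals.
Open Scope R_scope.

Record C := mkC { Re : R; Im : R }.
Definition C0 : C := mkC 0 0.
Definition C1 : C := mkC 1 0.
Definition Cadd (z w : C) : C := mkC (Re z + Re w) (Im z + Im w).
Definition Copp (z : C) : C := mkC (- Re z) (- Im z).
Definition Csub (z w : C) : C := Cadd z (Copp w).
Definition Cmul (z w : C) : C :=
  mkC (Re z * Re w - Im z * Im w) (Re z * Im w + Im z * Re w).
Definition Cmod (z : C) : R := sqrt (Re z * Re z + Im z * Im z).
Definition Csign (k : nat) : C := mkC ((-1) ^ k) 0.
Fixpoint Csum1 (f : nat -> C) (n : nat) : C :=
  match n with O => C0 | S m => Cadd (Csum1 f m) (f (S m)) end.

Definition directed (I : Type) (le : I -> I -> Prop) : Prop :=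
  inhabited I /\ (forall i, le i i) /\
  (forall i j k, le i j -> le j k -> le i k) /\
  (forall i j, exists k, le i k /\ le j k).

Record BanachSpace := {
  bs_car :> Type;
  bs_zero : bs_car;
  bs_add : bs_car -> bs_car -> bs_car;
  bs_opp : bs_car -> bs_car;
  bs_scal : C -> bs_car -> bs_car;
  bs_norm : bs_car -> R;
  bs_addA : forall u v w, bs_add u (bs_add v w) = bs_add (bs_add u v) w;
  bs_addC : forall u v, bs_add u v = bs_add v u;
  bs_add0 : forall u, bs_add bs_zero u = u;
  bs_addN : forall u, bs_add u (bs_opp u) = bs_zero;
  bs_scalDr : forall c u v, bs_scal c (bs_add u v) = bs_add (bs_scal c u) (bs_scal c v);
  bs_scalDl : forall c d u, bs_scal (Cadd c d) u = bs_add (bs_scal c u) (bs_scal d u);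
  bs_scalA : forall c d u, bs_scal (Cmul c d) u = bs_scal c (bs_scal d u);
  bs_scal1 : forall u, bs_scal C1 u = u;
  bs_norm_ge0 : forall u, 0 <= bs_norm u;
  bs_norm_eq0 : forall u, bs_norm u = 0 -> u = bs_zero;
  bs_normZ : forall c u, bs_norm (bs_scal c u) = Cmod c * bs_norm u;
  bs_normD : forall u v, bs_norm (bs_add u v) <= bs_norm u + bs_norm v;
  bs_complete : forall s : nat -> bs_car,
    (forall eps, eps > 0 -> exists N, forall m k, (N <= m)%nat -> (N <= k)%nat ->
        bs_norm (bs_add (s m) (bs_opp (s k))) < eps) ->
    exists l, forall eps, eps > 0 -> exists N, forall m, (N <= m)%nat ->
        bs_norm (bs_add (s m) (bs_opp l)) < eps
}.
Arguments bs_zero {_}. Arguments bs_add {_}. Arguments bs_opp {_}.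
Arguments bs_scal {_}. Arguments bs_norm {_}.
Definition bs_sub {V : BanachSpace} (u v : V) : V := bs_add u (bs_opp v).

Record BanachAlgebra := {
  ba_space :> BanachSpace;
  ba_mul : ba_space -> ba_space -> ba_space;
  ba_mulA : forall a b c, ba_mul a (ba_mul b c) = ba_mul (ba_mul a b) c;
  ba_mulDl : forall a b c, ba_mul (bs_add a b) c = bs_add (ba_mul a c) (ba_mul b c);
  ba_mulDr : forall a b c, ba_mul a (bs_add b c) = bs_add (ba_mul a b) (ba_mul a c);
  ba_mulZl : forall z a b, ba_mul (bs_scal z a) b = bs_scal z (ba_mul a b);
  ba_mulZr : forall z a b, ba_mul a (bs_scal z b) = bs_scal z (ba_mul a b);
  ba_normM : forall a b, bs_norm (ba_mul a b) <= bs_norm a * bs_norm b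
}.
Arguments ba_mul {_}.

Definition has_bai (A : BanachAlgebra) : Prop :=
  exists (I : Type) (le : I -> I -> Prop) (e : I -> A) (K : R),
    directed I le /\ (forall i, bs_norm (e i) <= K) /\
    forall (a : A) eps, eps > 0 -> exists i0, forall i, le i0 i ->
      bs_norm (bs_sub (ba_mul (e i) a) a) < eps /\
      bs_norm (bs_sub (ba_mul a (e i)) a) < eps.

Record BanachBimodule (A : BanachAlgebra) := {
  bm_space :> BanachSpace;
  lact : A -> bm_space -> bm_space;
  ract : bm_space -> A -> bm_space;
  lact_Dl : forall a b x, lact (bs_add a b) x = bs_add (lact a x) (lact b x);
  lact_Dr : forall a x y, lact a (bs_add x y) = bs_add (lact a x) (lact a y);
  lact_Zl : forall c a x, lact (bs_scal c a) x = bs_scal c (lact a x);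
  lact_Zr : forall c a x, lact a (bs_scal c x) = bs_scal c (lact a x);
  ract_Dl : forall x y a, ract (bs_add x y) a = bs_add (ract x a) (ract y a);
  ract_Dr : forall x a b, ract x (bs_add a b) = bs_add (ract x a) (ract x b);
  ract_Zl : forall c x a, ract (bs_scal c x) a = bs_scal c (ract x a);
  ract_Zr : forall c x a, ract x (bs_scal c a) = bs_scal c (ract x a);
  lact_M : forall a b x, lact (ba_mul a b) x = lact a (lact b x);
  ract_M : forall x a b, ract x (ba_mul a b) = ract (ract x a) b;
  lract : forall a x b, ract (lact a x) b = lact a (ract x b);
  act_bounded : exists K, 0 <= K /\ forall a x,
      bs_norm (lact a x) <= K * bs_norm a * bs_norm x /\
      bs_norm (ract x a) <= K * bs_norm a * bs_norm x
}.
Arguments lact {_ _}. Arguments ract {_ _}.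

Inductive in_span {V : BanachSpace} (S : V -> Prop) : V -> Prop :=
| span_zero : in_span S bs_zero
| span_gen : forall x, S x -> in_span S x
| span_lin : forall c x y, in_span S x -> in_span S y ->
    in_span S (bs_add (bs_scal c x) y).

Definition closed_span {V : BanachSpace} (S : V -> Prop) (x : V) : Prop :=
  forall eps, eps > 0 -> exists y, in_span S y /\ bs_norm (bs_sub x y) < eps.

Definition X1 {A : BanachAlgebra} (X : BanachBimodule A) : X -> Prop :=
  closed_span (fun y => exists (a b : A) (x : X), y = lact a (ract x b)).

(* Let P be (the predicate of) a closed subspace Y of X.  An element of Y^dual
   is represented by a function X -> C, of which only its values on Y matter.
   An n-tuple (a_1,...,a_n) is represented by a sequence a : nat -> A
   (a_k = a (k-1)); an n-cochain only depends on a 0, ..., a (n-1).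
   So a cochain is T : (nat -> A) -> X -> C, T a x = < x, T(a_1,..,a_n) >. *)
Definition Cochain {A : BanachAlgebra} (X : BanachBimodule A) : Type :=
  (nat -> A) -> X -> C.

Definition upd {A : Type} (a : nat -> A) (i : nat) (u : A) : nat -> A :=
  fun j => if Nat.eqb j i then u else a j.

Fixpoint prod_norm {A : BanachAlgebra} (a : nat -> A) (n : nat) : R :=
  match n with O => 1 | S m => prod_norm a m * bs_norm (a m) end.

Definition is_cochain {A : BanachAlgebra} {X : BanachBimodule A}
    (P : X -> Prop) (n : nat) (T : Cochain X) : Prop :=
  (forall a b : nat -> A, (forall i, (i < n)%nat -> a i = b i) ->
      forall x, P x -> T a x = T b x) /\
  (forall a (c : C) (x y : X), P x -> P y ->
      T a (bs_add (bs_scal c x) y) = Cadd (Cmul c (T a x)) (T a y)) /\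
  (forall i, (i < n)%nat -> forall a (c : C) (u v : A) x, P x ->
      T (upd a i (bs_add (bs_scal c u) v)) x
      = Cadd (Cmul c (T (upd a i u) x)) (T (upd a i v) x)) /\
  (exists K, 0 <= K /\ forall a x, P x ->
      Cmod (T a x) <= K * prod_norm a n * bs_norm x).

Definition cadd {A : BanachAlgebra} {X : BanachBimodule A} (T S : Cochain X) : Cochain X :=
  fun a x => Cadd (T a x) (S a x).
Definition cscal {A : BanachAlgebra} {X : BanachBimodule A} (c : C) (T : Cochain X) : Cochain X :=
  fun a x => Cmul c (T a x).
Definition csub {A : BanachAlgebra} {X : BanachBimodule A} (T S : Cochain X) : Cochain X :=
  fun a x => Csub (T a x) (S a x).

(* merging a_k a_{k+1} (1-indexed) in the tuple *)
Definition merge {A : BanachAlgebra} (k : nat) (a : nat -> A) : nat -> A :=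
  fun i => if Nat.ltb i (k - 1)%nat then a i
           else if Nat.eqb i (k - 1)%nat then ba_mul (a (k - 1)%nat) (a k)
           else a (S i).
Definition shift {A : Type} (a : nat -> A) : nat -> A := fun i => a (S i).

(* Hochschild coboundary delta^n for the dual module Y^dual, using
   <x, a.phi> = <x.a, phi>,  <x, phi.a> = <a.x, phi>. *)
Definition delta {A : BanachAlgebra} {X : BanachBimodule A}
    (n : nat) (T : Cochain X) : Cochain X :=
  fun a x =>
    Cadd (Cadd (T (shift a) (ract x (a O)))
               (Csum1 (fun k => Cmul (Csign k) (T (merge k a) x)) n))
         (Cmul (Csign (S n)) (T a (lact (a n) x))).

Definition cocycle {A : BanachAlgebra} {X : BanachBimodule A}
    (P : X -> Prop) (n : nat) (T : Cochain X) : Prop :=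
  is_cochain P n T /\ forall a x, P x -> delta n T a x = C0.

(* B^n = range of delta^{n-1}, for n >= 1 *)
Definition coboundary {A : BanachAlgebra} {X : BanachBimodule A}
    (P : X -> Prop) (n : nat) (T : Cochain X) : Prop :=
  is_cochain P n T /\
  exists S, is_cochain P (pred n) S /\
    forall a x, P x -> delta (pred n) S a x = T a x.

(* closure of B^n in the strong topology of BL^n(A, Y^dual), via nets *)
Definition strong_closure_B {A : BanachAlgebra} {X : BanachBimodule A}
    (P : X -> Prop) (n : nat) (T : Cochain X) : Prop :=
  is_cochain P n T /\
  exists (I : Type) (le : I -> I -> Prop) (S : I -> Cochain X),
    directed I le /\ (forall i, coboundary P n (S i)) /\
    forall a eps, eps > 0 -> exists i0, forall i, le i0 i ->
      forall x, P x -> Cmod (Csub (S i a x) (T a x)) <= eps * bs_norm x.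

(* H^n_app(A, Y1^dual) and H^n_app(A, Y2^dual) are isomorphic (as vector spaces):
   there is a map Phi on cocycles, linear modulo equality in Y2^dual, compatible
   with equality in Y1^dual, such that the induced map
   Z^n(A,Y1^dual)/cl B^n(A,Y1^dual) -> Z^n(A,Y2^dual)/cl B^n(A,Y2^dual)
   is well defined, injective and surjective. *)
Definition Happ_iso {A : BanachAlgebra} {X : BanachBimodule A}
    (P1 P2 : X -> Prop) (n : nat) : Prop :=
  exists Phi : Cochain X -> Cochain X,
    (forall T, cocycle P1 n T -> cocycle P2 n (Phi T)) /\
    (forall T S, cocycle P1 n T -> cocycle P1 n S ->
       (forall a x, P1 x -> T a x = S a x) ->
       forall a x, P2 x -> Phi T a x = Phi S a x) /\
    (forall T S c, cocycle P1 n T -> cocycle P1 n S ->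
       forall a x, P2 x ->
       Phi (cadd (cscal c T) S) a x = Cadd (Cmul c (Phi T a x)) (Phi S a x)) /\
    (forall T, cocycle P1 n T ->
       (strong_closure_B P1 n T <-> strong_closure_B P2 n (Phi T))) /\
    (forall S, cocycle P2 n S ->
       exists T, cocycle P1 n T /\ strong_closure_B P2 n (csub (Phi T) S)).

(* Main.v *)
Require Import Defs.
From Stdlib Require Import Reals.
From Stdlib Require Import Lra Lia Psatz Ring Field Classical ClassicalEpsilon FunctionalExtensionality.
From mathcomp Require ssreflect classical_sets boolp filter.
Import Defs.
Set Bullet Behavior "Strict Subproofs".
Open Scope R_scope.

Module UF.
Import ssreflect classical_sets boolp filter.
Lemma ultra_exists (I : Type) (le : I -> I -> Prop) :
  directed I le ->
  exists U : (I -> Prop) -> Prop,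
    U (fun _ => True) /\ ~ U (fun _ => False) /\
    (forall A B : I -> Prop, U A -> (forall x, A x -> B x) -> U B) /\
    (forall A B : I -> Prop, U A -> U B -> U (fun x => A x /\ B x)) /\
    (forall A : I -> Prop, U A \/ U (fun x => ~ A x)) /\
    (forall i0, U (fun i => le i0 i)).
Proof.
move=> [[j0] [refl [trans dir]]].
have FF : Filter (filter_from setT (fun k => (fun i => le k i))).
  apply: filter_fromT_filter; first by exists j0.
  move=> i j; have [k [hik hjk]] := dir i j; exists k => x /= hkx.
  by split; apply: trans hkx.
have PF : ProperFilter (filter_from setT (fun k => (fun i => le k i))).
  apply: filter_from_proper => k _; exists k; exact: refl.
have [G [UG sFG]] := ultraFilterLemma PF.
exists G; split; first exact: filterT.
split; first by move=> h; apply: (filter_not_empty G); exact h.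
split; first by move=> A B GA AB; apply: filterS GA.
split; first by move=> A B GA GB; exact: (filterI GA GB).
split; first by move=> A; exact: in_ultra_setVsetC.
by move=> j; apply: sFG; exists j.
Qed.
End UF.

Lemma Ceq (z w : Defs.C) : Re z = Re w -> Im z = Im w -> z = w.
Proof. destruct z, w; simpl; intros; subst; reflexivity. Qed.

Lemma Cring_th : ring_theory C0 C1 Cadd Cmul Csub Copp (@eq Defs.C).
Proof.
  constructor; intros; apply Ceq; unfold Cadd, Cmul, Csub, Copp, C0, C1; simpl; ring.
Qed.
Add Ring Cring : Cring_th.

Lemma Cmod_ge0 z : 0 <= Cmod z.
Proof. unfold Cmod; apply sqrt_pos. Qed.

Lemma Cmod_sq z : Cmod z * Cmod z = Re z * Re z + Im z * Im z.
Proof. unfold Cmod; rewrite sqrt_sqrt; nra. Qed.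

Lemma Cmod_le_iff z r : 0 <= r -> (Cmod z <= r <-> Re z * Re z + Im z * Im z <= r * r).
Proof.
  intros Hr. pose proof (Cmod_ge0 z). rewrite <- Cmod_sq. split; intros; nra.
Qed.

Lemma Cmod_triangle z w : Cmod (Cadd z w) <= Cmod z + Cmod w.
Proof.
  pose proof (Cmod_ge0 z); pose proof (Cmod_ge0 w).
  apply Cmod_le_iff; [lra|].
  pose proof (Cmod_sq z); pose proof (Cmod_sq w). unfold Cadd; simpl.
  assert (Re z * Re w + Im z * Im w <= Cmod z * Cmod w).
  { destruct (Rle_dec (Re z * Re w + Im z * Im w) 0); [nra|].
    assert (HCS: (Re z * Re w + Im z * Im w)*(Re z * Re w + Im z * Im w) <= (Cmod z * Cmod z) * (Cmod w * Cmod w)).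
    { rewrite H1, H2. pose proof (Rle_0_sqr (Re z * Im w - Im z * Re w)). unfold Rsqr in *. nra. }
    assert (0 <= Cmod z * Cmod w) by nra.
    destruct (Rle_dec (Re z * Re w + Im z * Im w) (Cmod z * Cmod w)); auto. nra. }
  nra.
Qed.

Lemma Cmod_mul z w : Cmod (Cmul z w) = Cmod z * Cmod w.
Proof.
  unfold Cmod, Cmul; simpl. rewrite <- sqrt_mult by nra. f_equal. ring.
Qed.

Lemma Cmod_Re z : Rabs (Re z) <= Cmod z.
Proof.
  pose proof (Cmod_ge0 z); pose proof (Cmod_sq z).
  rewrite <- (Rabs_pos_eq (Cmod z)) by lra. apply Rsqr_le_abs_0. unfold Rsqr. nra.
Qed.
Lemma Cmod_Im z : Rabs (Im z) <= Cmod z.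
Proof.
  pose proof (Cmod_ge0 z); pose proof (Cmod_sq z).
  rewrite <- (Rabs_pos_eq (Cmod z)) by lra. apply Rsqr_le_abs_0. unfold Rsqr. nra.
Qed.
Lemma Cmod_le_ReIm z : Cmod z <= Rabs (Re z) + Rabs (Im z).
Proof.
  apply Cmod_le_iff. pose proof (Rabs_pos (Re z)); pose proof (Rabs_pos (Im z)); lra.
  assert (Rabs (Re z) * Rabs (Re z) = Re z * Re z) by (rewrite <- Rabs_mult; apply Rabs_pos_eq; nra).
  assert (Rabs (Im z) * Rabs (Im z) = Im z * Im z) by (rewrite <- Rabs_mult; apply Rabs_pos_eq; nra).
  pose proof (Rabs_pos (Re z)); pose proof (Rabs_pos (Im z)); nra.
Qed.

Lemma Cmod_0 : Cmod C0 = 0.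
Proof. unfold Cmod, C0; simpl. replace (0*0+0*0) with 0 by ring. apply sqrt_0. Qed.

Lemma Cmod_eq0 z : Cmod z = 0 -> z = C0.
Proof.
  intros H. pose proof (Cmod_sq z). rewrite H in H0.
  apply Ceq; simpl; nra.
Qed.

Lemma Cmod_small z : (forall eps, eps > 0 -> Cmod z <= eps) -> z = C0.
Proof.
  intros H. apply Cmod_eq0. pose proof (Cmod_ge0 z).
  destruct (Rle_dec (Cmod z) 0); [lra|].
  specialize (H (Cmod z / 2)). lra.
Qed.

Lemma Cmod_opp z : Cmod (Copp z) = Cmod z.
Proof. unfold Cmod, Copp; simpl. f_equal; ring. Qed.

Lemma Csign_sq k : Cmul (Csign k) (Csign k) = C1.
Proof.
  apply Ceq; unfold Cmul, Csign, C1; simpl; [|ring].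
  rewrite <- Rpow_mult_distr. replace (-1 * -1) with 1 by ring. rewrite pow1. ring.
Qed.

Lemma Csign_S k : Csign (S k) = Copp (Csign k).
Proof. apply Ceq; unfold Csign, Copp; simpl; ring. Qed.

Lemma Cmod_Csign k : Cmod (Csign k) = 1.
Proof.
  pose proof (Cmod_ge0 (Csign k)).
  assert (Cmod (Csign k) * Cmod (Csign k) = 1).
  { rewrite <- Cmod_mul, Csign_sq. unfold Cmod, C1; simpl.
    replace (1*1+0*0) with 1 by ring; apply sqrt_1. }
  nra.
Qed.

Lemma Cmod_1 : Cmod C1 = 1.
Proof. unfold Cmod, C1; simpl. replace (1*1+0*0) with 1 by ring; apply sqrt_1. Qed.
Lemma Cmod_m1 : Cmod (Copp C1) = 1.
Proof. rewrite Cmod_opp; apply Cmod_1. Qed.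

Lemma Cmod_sub_sym z w : Cmod (Csub z w) = Cmod (Csub w z).
Proof. replace (Csub z w) with (Copp (Csub w z)) by ring. apply Cmod_opp. Qed.

Lemma Cmod_sub_tri z w u : Cmod (Csub z u) <= Cmod (Csub z w) + Cmod (Csub w u).
Proof.
  replace (Csub z u) with (Cadd (Csub z w) (Csub w u)) by ring. apply Cmod_triangle.
Qed.

Lemma Csum1_ext f g n : (forall k, (1 <= k <= n)%nat -> f k = g k) -> Csum1 f n = Csum1 g n.
Proof.
  induction n; intros H; simpl; auto.
  rewrite IHn by (intros; apply H; lia). rewrite H by lia. reflexivity.
Qed.
Lemma Csum1_add f g n : Csum1 (fun k => Cadd (f k) (g k)) n = Cadd (Csum1 f n) (Csum1 g n).
Proof. induction n; simpl. apply Ceq; unfold C0; simpl; ring. rewrite IHn; ring. Qed.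
Lemma Csum1_scal c f n : Csum1 (fun k => Cmul c (f k)) n = Cmul c (Csum1 f n).
Proof. induction n; simpl. apply Ceq; unfold C0, Cmul; simpl; ring. rewrite IHn; ring. Qed.
Lemma Csum1_zero f n : (forall k, f k = C0) -> Csum1 f n = C0.
Proof. intros H; induction n; simpl; auto. rewrite IHn, H; ring. Qed.
Lemma Csum1_shift f m : Csum1 f (S m) = Cadd (f 1%nat) (Csum1 (fun k => f (S k)) m).
Proof. induction m. simpl. ring. change (Csum1 f (S (S m))) with (Cadd (Csum1 f (S m)) (f (S (S m)))).
  rewrite IHm. simpl. ring. Qed.

Section BS.
Variable V : BanachSpace.
Implicit Types u v w : V.

Lemma addr0 u : bs_add u bs_zero = u.
Proof. rewrite bs_addC; apply bs_add0. Qed.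
Lemma addNr u : bs_add (bs_opp u) u = bs_zero.
Proof. rewrite bs_addC; apply bs_addN. Qed.
Lemma add_cancel_l u v w : bs_add u v = bs_add u w -> v = w.
Proof.
  intros H. rewrite <- (bs_add0 _ v), <- (bs_add0 _ w), <- (addNr u), <- !bs_addA, H. reflexivity.
Qed.
Lemma opp_unique u v : bs_add u v = bs_zero -> v = bs_opp u.
Proof. intros H. apply (add_cancel_l u). rewrite H, bs_addN. reflexivity. Qed.
Lemma scal0 u : bs_scal C0 u = bs_zero.
Proof.
  apply (add_cancel_l (bs_scal C0 u)). rewrite <- bs_scalDl, addr0.
  f_equal. apply Ceq; unfold Cadd, C0; simpl; ring.
Qed.
Lemma scal_zero c : bs_scal c (@bs_zero V) = bs_zero.
Proof.
  apply (add_cancel_l (bs_scal c bs_zero)). rewrite <- bs_scalDr, !addr0. reflexivity.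
Qed.
Lemma scalN1 u : bs_scal (Copp C1) u = bs_opp u.
Proof.
  apply opp_unique. rewrite <- (bs_scal1 _ u) at 1. rewrite <- bs_scalDl.
  replace (Cadd C1 (Copp C1)) with C0 by ring. apply scal0.
Qed.
Lemma oppK u : bs_opp (bs_opp u) = u.
Proof. symmetry; apply opp_unique, addNr. Qed.
Lemma opp_add u v : bs_opp (bs_add u v) = bs_add (bs_opp u) (bs_opp v).
Proof. rewrite <- !scalN1; apply bs_scalDr. Qed.
Lemma scal_opp c u : bs_scal c (bs_opp u) = bs_opp (bs_scal c u).
Proof. rewrite <- !scalN1, <- !bs_scalA. f_equal; ring. Qed.
Lemma opp_zero : bs_opp (@bs_zero V) = bs_zero.
Proof. rewrite <- scalN1; apply scal_zero. Qed.
Lemma norm0 : bs_norm (@bs_zero V) = 0.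
Proof. rewrite <- (scal0 bs_zero), bs_normZ, Cmod_0. ring. Qed.
Lemma norm_opp u : bs_norm (bs_opp u) = bs_norm u.
Proof. rewrite <- scalN1, bs_normZ, Cmod_m1; ring. Qed.
Lemma subrr u : bs_sub u u = bs_zero.
Proof. apply bs_addN. Qed.
Lemma sub_add_sub u v w : bs_add (bs_sub u v) (bs_sub v w) = bs_sub u w.
Proof.
  unfold bs_sub. rewrite <- bs_addA, (bs_addA _ (bs_opp v) v), addNr, bs_add0. reflexivity.
Qed.
Lemma sub_opp u v : bs_opp (bs_sub u v) = bs_sub v u.
Proof. unfold bs_sub. rewrite opp_add, oppK, bs_addC. reflexivity. Qed.
Lemma norm_sub_sym u v : bs_norm (bs_sub u v) = bs_norm (bs_sub v u).
Proof. rewrite <- sub_opp, norm_opp. reflexivity. Qed.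
Lemma norm_sub_tri u v w : bs_norm (bs_sub u w) <= bs_norm (bs_sub u v) + bs_norm (bs_sub v w).
Proof. rewrite <- (sub_add_sub u v w). apply bs_normD. Qed.
Lemma sub_addK u v : bs_add (bs_sub u v) v = u.
Proof. unfold bs_sub. rewrite <- bs_addA, addNr, addr0. reflexivity. Qed.
Lemma sub0 u : bs_sub u bs_zero = u.
Proof. unfold bs_sub. rewrite opp_zero, addr0; reflexivity. Qed.
Lemma scal_sub c u v : bs_scal c (bs_sub u v) = bs_sub (bs_scal c u) (bs_scal c v).
Proof. unfold bs_sub. rewrite bs_scalDr, scal_opp. reflexivity. Qed.
Lemma add_sub_add u v u' v' :
  bs_sub (bs_add u v) (bs_add u' v') = bs_add (bs_sub u u') (bs_sub v v').
Proof.
  unfold bs_sub. rewrite opp_add. rewrite <- !bs_addA. f_equal.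
  rewrite !bs_addA. rewrite (bs_addC _ v (bs_opp u')). reflexivity.
Qed.
Lemma lin_sub c u v u' v' :
  bs_sub (bs_add (bs_scal c u) v) (bs_add (bs_scal c u') v') =
  bs_add (bs_scal c (bs_sub u u')) (bs_sub v v').
Proof. rewrite add_sub_add, scal_sub. reflexivity. Qed.
Lemma norm_sub_le u v : bs_norm (bs_sub u v) <= bs_norm u + bs_norm v.
Proof. unfold bs_sub. eapply Rle_trans; [apply bs_normD|]. rewrite norm_opp; lra. Qed.
Lemma sub_as_lin u v : bs_sub u v = bs_add (bs_scal (Copp C1) v) u.
Proof. rewrite scalN1, bs_addC. reflexivity. Qed.
Lemma norm_ge_sub u v : bs_norm u <= bs_norm (bs_sub u v) + bs_norm v.
Proof. rewrite <- (sub_addK u v) at 1. apply bs_normD. Qed.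
End BS.

Lemma additive_zero (V W : BanachSpace) (f : V -> W) :
  (forall u v, f (bs_add u v) = bs_add (f u) (f v)) -> f bs_zero = bs_zero.
Proof.
  intros H. apply (add_cancel_l _ (f bs_zero)). rewrite <- H, !addr0. reflexivity.
Qed.
Lemma additive_opp (V W : BanachSpace) (f : V -> W) :
  (forall u v, f (bs_add u v) = bs_add (f u) (f v)) -> forall u, f (bs_opp u) = bs_opp (f u).
Proof.
  intros H u. apply opp_unique. rewrite <- H, bs_addN. apply additive_zero; auto.
Qed.
Lemma additive_sub (V W : BanachSpace) (f : V -> W) :
  (forall u v, f (bs_add u v) = bs_add (f u) (f v)) -> forall u v, f (bs_sub u v) = bs_sub (f u) (f v).
Proof. intros H u v. unfold bs_sub. rewrite H, (additive_opp _ _ f H). reflexivity. Qed.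

Section BM.
Variable A : BanachAlgebra.
Variable X : BanachBimodule A.

Lemma lact_sub_r a (x y : X) : lact a (bs_sub x y) = bs_sub (lact a x) (lact a y).
Proof. apply (additive_sub _ _ (lact a)). intros; apply lact_Dr. Qed.
Lemma lact_zero_r a : lact a (@bs_zero X) = bs_zero.
Proof. apply (additive_zero _ _ (lact a)). intros; apply lact_Dr. Qed.
Lemma ract_sub_l (x y : X) a : ract (bs_sub x y) a = bs_sub (ract x a) (ract y a).
Proof. apply (additive_sub _ _ (fun x => ract x a)). intros; apply ract_Dl. Qed.
Lemma ract_zero_l a : ract (@bs_zero X) a = bs_zero.
Proof. apply (additive_zero _ _ (fun x : X => ract x a)). intros; apply ract_Dl. Qed.
Lemma lact_sub_l (a b : A) (x : X) : lact (bs_sub a b) x = bs_sub (lact a x) (lact b x).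
Proof. apply (additive_sub _ _ (fun a => lact a x)). intros; apply lact_Dl. Qed.
Lemma ract_sub_r (x : X) (a b : A) : ract x (bs_sub a b) = bs_sub (ract x a) (ract x b).
Proof. apply (additive_sub _ _ (fun a => ract x a)). intros; apply ract_Dr. Qed.
Lemma lact_lin_r a c (x y : X) : lact a (bs_add (bs_scal c x) y) = bs_add (bs_scal c (lact a x)) (lact a y).
Proof. rewrite lact_Dr, lact_Zr. reflexivity. Qed.
Lemma ract_lin_l c (x y : X) a : ract (bs_add (bs_scal c x) y) a = bs_add (bs_scal c (ract x a)) (ract y a).
Proof. rewrite ract_Dl, ract_Zl. reflexivity. Qed.

Definition gen (y : X) : Prop := exists (a b : A) (x : X), y = lact a (ract x b).

Definition submod (P : X -> Prop) : Prop :=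
  P bs_zero /\ (forall c x y, P x -> P y -> P (bs_add (bs_scal c x) y)) /\
  (forall a x, P x -> P (lact a x)) /\ (forall x a, P x -> P (ract x a)).

Lemma span_in_closed (S : X -> Prop) x : in_span S x -> closed_span S x.
Proof. intros H eps Heps. exists x; split; auto. rewrite subrr, norm0; lra. Qed.

Lemma closed_span_lin (S : X -> Prop) c x y :
  closed_span S x -> closed_span S y -> closed_span S (bs_add (bs_scal c x) y).
Proof.
  intros Hx Hy eps Heps.
  pose proof (Cmod_ge0 c).
  destruct (Hx (eps / (2 * (Cmod c + 1)))) as [x' [Hx' Nx]].
  { apply Rdiv_lt_0_compat; lra. }
  destruct (Hy (eps / 2)) as [y' [Hy' Ny]]; [lra|].
  exists (bs_add (bs_scal c x') y'). split; [apply span_lin; auto|].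
  rewrite lin_sub. eapply Rle_lt_trans; [apply bs_normD|]. rewrite bs_normZ.
  assert (Cmod c * bs_norm (bs_sub x x') <= eps / 2).
  { assert (Cmod c * bs_norm (bs_sub x x') <= (Cmod c + 1) * (eps / (2 * (Cmod c + 1)))).
    { pose proof (bs_norm_ge0 _ (bs_sub x x')). nra. }
    replace ((Cmod c + 1) * (eps / (2 * (Cmod c + 1)))) with (eps / 2) in H0 by (field; lra).
    auto. }
  lra.
Qed.

Lemma act_bound_ex : exists K, 0 <= K /\ forall (a : A) (x : X),
  bs_norm (lact a x) <= K * bs_norm a * bs_norm x /\
  bs_norm (ract x a) <= K * bs_norm a * bs_norm x.
Proof. apply act_bounded. Qed.

Lemma closed_span_map (S : X -> Prop) (f : X -> X) (K : R) :
  0 <= K ->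
  (forall x y, f (bs_add x y) = bs_add (f x) (f y)) ->
  (forall c x, f (bs_scal c x) = bs_scal c (f x)) ->
  (forall x, bs_norm (f x) <= K * bs_norm x) ->
  (forall x, S x -> S (f x)) ->
  forall x, closed_span S x -> closed_span S (f x).
Proof.
  intros HK Hadd Hsc Hb HS.
  assert (Hsp : forall x, in_span S x -> in_span S (f x)).
  { induction 1.
    - rewrite (additive_zero _ _ f Hadd). apply span_zero.
    - apply span_gen; auto.
    - rewrite Hadd, Hsc. apply span_lin; auto. }
  intros x Hx eps Heps.
  destruct (Hx (eps / (K + 1))) as [y [Hy Ny]]. { apply Rdiv_lt_0_compat; lra. }
  exists (f y). split; [apply Hsp; auto|].
  rewrite <- (additive_sub _ _ f Hadd).
  eapply Rle_lt_trans; [apply Hb|].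
  assert (0 < eps / (K + 1)) by (apply Rdiv_lt_0_compat; lra).
  apply Rle_lt_trans with (K * (eps / (K + 1))).
  - pose proof (bs_norm_ge0 _ (bs_sub x y)). nra.
  - replace eps with ((K + 1) * (eps / (K + 1))) at 2 by (field; lra). nra.
Qed.

Lemma X1_submod : submod (X1 X).
Proof.
  destruct act_bound_ex as [K [HK Hb]].
  unfold X1. split; [|split; [|split]].
  - apply span_in_closed, span_zero.
  - intros; apply closed_span_lin; auto.
  - intros a x Hx.
    apply (closed_span_map _ (lact a) (K * bs_norm a)); auto.
    + pose proof (bs_norm_ge0 _ a); nra.
    + intros; apply lact_Dr.
    + intros; apply lact_Zr.
    + intros y. apply Hb.
    + intros y [a' [b' [z ->]]]. exists (ba_mul a a'), b', z. rewrite lact_M; reflexivity.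
  - intros x a Hx.
    apply (closed_span_map _ (fun y => ract y a) (K * bs_norm a)); auto.
    + pose proof (bs_norm_ge0 _ a); nra.
    + intros; apply ract_Dl.
    + intros; apply ract_Zl.
    + intros y. apply Hb.
    + intros y [a' [b' [z ->]]]. exists a', (ba_mul b' a), z. rewrite lract, ract_M; reflexivity.
Qed.

Lemma X1_gen (a b : A) (x : X) : X1 X (lact a (ract x b)).
Proof. apply span_in_closed, span_gen. exists a, b, x; reflexivity. Qed.

Lemma submod_sub P x y : submod P -> P x -> P y -> P (bs_sub x y).
Proof.
  intros [_ [Hl _]] Hx Hy. rewrite sub_as_lin. apply Hl; auto.
Qed.

Lemma submod_True : submod (fun _ => True).
Proof. repeat split. Qed.

End BM.

Lemma Rabs_le_between' x B : Rabs x <= B -> - B <= x <= B.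
Proof. unfold Rabs; destruct (Rcase_abs x); lra. Qed.

Section ULim.
Variable I : Type.
Variable le : I -> I -> Prop.
Variable U : (I -> Prop) -> Prop.
Hypothesis HT : U (fun _ => True).
Hypothesis HF : ~ U (fun _ => False).
Hypothesis HS : forall A B : I -> Prop, U A -> (forall x, A x -> B x) -> U B.
Hypothesis HI : forall A B : I -> Prop, U A -> U B -> U (fun x => A x /\ B x).
Hypothesis HUlt : forall A : I -> Prop, U A \/ U (fun x => ~ A x).
Hypothesis Htail : forall i0, U (fun i => le i0 i).

Lemma U_ex A : U A -> exists j, A j.
Proof.
  intros H. apply NNPP; intros Hn. apply HF. apply (HS A); auto.
  intros x Ax; apply Hn; exists x; auto.
Qed.

Definition convR (f : I -> R) (L : R) := forall eps, eps > 0 -> U (fun j => Rabs (f j - L) < eps).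
Definition convC (f : I -> Defs.C) (L : Defs.C) :=
  forall eps, eps > 0 -> U (fun j => Cmod (Csub (f j) L) < eps).
Definition boundedC (f : I -> Defs.C) := exists B, forall j, Cmod (f j) <= B.

Lemma convR_exists (f : I -> R) B : (forall j, Rabs (f j) <= B) -> exists L, convR f L.
Proof.
  intros HB.
  set (E := fun r => U (fun j => r <= f j)).
  assert (Hb : bound E).
  { exists (B + 1). intros r Hr. destruct (Rle_dec r (B + 1)); auto.
    exfalso. apply HF. apply (HS _ _ Hr). intros j Hj. specialize (HB j).
    apply Rabs_le_between' in HB. lra. }
  assert (Hne : exists x, E x).
  { exists (- B). apply (HS _ _ HT). intros j _. specialize (HB j). apply Rabs_le_between' in HB. lra. }
  destruct (completeness E Hb Hne) as [L [Hub Hlub]].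
  exists L. intros eps Heps.
  assert (H1 : U (fun j => f j < L + eps)).
  { destruct (HUlt (fun j => f j < L + eps)) as [H|H]; auto.
    exfalso. assert (E (L + eps)).
    { apply (HS _ _ H). intros j Hj. lra. }
    specialize (Hub _ H0). lra. }
  assert (H2 : U (fun j => L - eps < f j)).
  { destruct (classic (exists r, E r /\ L - eps < r)) as [[r [Er Hr]]|Hn].
    - apply (HS _ _ Er). intros j Hj. lra.
    - exfalso. assert (L <= L - eps); [|lra].
      apply Hlub. intros r Er. destruct (Rle_dec r (L - eps)); auto.
      exfalso; apply Hn; exists r; split; auto; lra. }
  apply (HS _ _ (HI _ _ H1 H2)). intros j [Ha Hb']. apply Rabs_def1; lra.
Qed.

Lemma convC_exists f : boundedC f -> exists L, convC f L.
Proof.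
  intros [B HB].
  destruct (convR_exists (fun j => Re (f j)) B) as [Lr Hr].
  { intros j. eapply Rle_trans; [apply Cmod_Re|apply HB]. }
  destruct (convR_exists (fun j => Im (f j)) B) as [Li Hi].
  { intros j. eapply Rle_trans; [apply Cmod_Im|apply HB]. }
  exists (mkC Lr Li). intros eps Heps.
  apply (HS _ _ (HI _ _ (Hr (eps/2) ltac:(lra)) (Hi (eps/2) ltac:(lra)))).
  intros j [H1 H2]. eapply Rle_lt_trans; [apply Cmod_le_ReIm|].
  unfold Csub, Cadd, Copp; simpl. unfold Rminus in H1, H2. lra.
Qed.

Lemma convC_unique f L M : convC f L -> convC f M -> L = M.
Proof.
  intros H1 H2.
  assert (Csub L M = C0).
  { apply Cmod_small. intros eps Heps.
    destruct (U_ex _ (HI _ _ (H1 (eps/2) ltac:(lra)) (H2 (eps/2) ltac:(lra)))) as [j [A1 A2]].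
    pose proof (Cmod_sub_tri L (f j) M). pose proof (Cmod_sub_sym L (f j)). lra. }
  replace L with (Cadd (Csub L M) M) by ring. rewrite H. ring.
Qed.

Definition ulim (f : I -> Defs.C) : Defs.C := epsilon (inhabits C0) (fun L => convC f L).

Lemma ulim_conv f : boundedC f -> convC f (ulim f).
Proof. intros Hb. unfold ulim. apply epsilon_spec. apply convC_exists; auto. Qed.

Lemma ulim_eq f L : convC f L -> ulim f = L.
Proof.
  intros H. unfold ulim. apply (convC_unique f); auto. apply epsilon_spec. exists L; auto.
Qed.

Lemma convC_add f g L M : convC f L -> convC g M -> convC (fun j => Cadd (f j) (g j)) (Cadd L M).
Proof.
  intros H1 H2 eps Heps.
  apply (HS _ _ (HI _ _ (H1 (eps/2) ltac:(lra)) (H2 (eps/2) ltac:(lra)))).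
  intros j [A1 A2]. replace (Csub (Cadd (f j) (g j)) (Cadd L M)) with
    (Cadd (Csub (f j) L) (Csub (g j) M)) by ring.
  eapply Rle_lt_trans; [apply Cmod_triangle|lra].
Qed.

Lemma convC_scal c f L : convC f L -> convC (fun j => Cmul c (f j)) (Cmul c L).
Proof.
  intros H eps Heps. pose proof (Cmod_ge0 c).
  apply (HS _ _ (H (eps / (Cmod c + 1)) ltac:(apply Rdiv_lt_0_compat; lra))).
  intros j Hj. replace (Csub (Cmul c (f j)) (Cmul c L)) with (Cmul c (Csub (f j) L)) by ring.
  rewrite Cmod_mul. pose proof (Cmod_ge0 (Csub (f j) L)).
  apply Rle_lt_trans with (Cmod c * (eps / (Cmod c + 1))). nra.
  assert (0 < eps / (Cmod c + 1)) by (apply Rdiv_lt_0_compat; lra).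
  replace eps with ((Cmod c + 1) * (eps / (Cmod c + 1))) at 2 by (field; lra). nra.
Qed.

Lemma convC_const c : convC (fun _ => c) c.
Proof.
  intros eps Heps. apply (HS _ _ HT). intros. replace (Csub c c) with C0 by ring.
  rewrite Cmod_0; lra.
Qed.

Lemma convC_ext f g L : (forall j, f j = g j) -> convC f L -> convC g L.
Proof. intros He H eps Heps. apply (HS _ _ (H eps Heps)). intros j; rewrite He; auto. Qed.

Lemma convC_Csum1 (F : nat -> I -> Defs.C) (L : nat -> Defs.C) m :
  (forall k, convC (F k) (L k)) ->
  convC (fun j => Csum1 (fun k => F k j) m) (Csum1 L m).
Proof.
  intros H. induction m; simpl.
  - apply convC_const.
  - apply convC_add; auto.
Qed.

Lemma convC_tail f g L : convC f L ->
  (forall eps, eps > 0 -> exists j0, forall j, le j0 j -> Cmod (Csub (g j) (f j)) < eps) ->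
  convC g L.
Proof.
  intros H Ht eps Heps.
  destruct (Ht (eps/2) ltac:(lra)) as [j0 Hj0].
  apply (HS _ _ (HI _ _ (H (eps/2) ltac:(lra)) (Htail j0))).
  intros j [A1 A2]. specialize (Hj0 j A2).
  pose proof (Cmod_sub_tri (g j) (f j) L). lra.
Qed.

Lemma convC_bound f L B : convC f L -> (forall j, Cmod (f j) <= B) -> Cmod L <= B.
Proof.
  intros H HB.
  destruct (Rle_dec (Cmod L) B) as [|Hn]; auto. exfalso.
  assert (Heps : Cmod L - B > 0) by lra.
  destruct (U_ex _ (H _ Heps)) as [j Hj].
  specialize (HB j).
  pose proof (Cmod_triangle (Csub L (f j)) (f j)).
  replace (Cadd (Csub L (f j)) (f j)) with L in H0 by ring.
  rewrite Cmod_sub_sym in H0. lra.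
Qed.

Lemma ulim_const c : ulim (fun _ => c) = c.
Proof. apply ulim_eq, convC_const. Qed.

End ULim.

Definition ccons {T : Type} (e : T) (a : nat -> T) : nat -> T :=
  fun i => match i with O => e | S i => a i end.

Section PN.
Variable A : BanachAlgebra.
Lemma prod_norm_ge0 (a : nat -> A) n : 0 <= prod_norm a n.
Proof. induction n; simpl. lra. pose proof (bs_norm_ge0 _ (a n)). nra. Qed.
Lemma prod_norm_ext (a b : nat -> A) n : (forall i, (i < n)%nat -> a i = b i) -> prod_norm a n = prod_norm b n.
Proof.
  induction n; intros H; simpl; auto. rewrite IHn by (intros; apply H; lia). rewrite H by lia. auto.
Qed.
Lemma prod_norm_upd (a : nat -> A) n i : (i < n)%nat ->
  exists Q, 0 <= Q /\ forall u, prod_norm (upd a i u) n = Q * bs_norm u.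
Proof.
  induction n; intros Hi; [lia|].
  destruct (Nat.eq_dec i n) as [->|Hne].
  - exists (prod_norm a n). split; [apply prod_norm_ge0|]. intros u. simpl.
    rewrite (prod_norm_ext (upd a n u) a).
    + unfold upd. rewrite Nat.eqb_refl. auto.
    + intros j Hj. unfold upd. destruct (Nat.eqb_spec j n); [lia|auto].
  - destruct (IHn ltac:(lia)) as [Q [HQ HQe]].
    exists (Q * bs_norm (a n)). split. pose proof (bs_norm_ge0 _ (a n)); nra.
    intros u; simpl. rewrite HQe. unfold upd. destruct (Nat.eqb_spec n i); [lia|]. ring.
Qed.
Lemma prod_norm_cons (e : A) a m : prod_norm (ccons e a) (S m) = bs_norm e * prod_norm a m.
Proof. induction m; simpl in *. ring. rewrite IHm. ring. Qed.
End PN.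

Lemma upd_same {T : Type} (a : nat -> T) i : upd a i (a i) = a.
Proof. apply functional_extensionality; intros j. unfold upd. destruct (Nat.eqb_spec j i); subst; auto. Qed.

Section Coch.
Variable A : BanachAlgebra.
Variable X : BanachBimodule A.
Variable P : X -> Prop.
Hypothesis HP : submod A X P.

Lemma cochain_zero_x n T a : is_cochain P n T -> T a bs_zero = C0.
Proof.
  intros [_ [Hl _]]. destruct HP as [H0 _].
  pose proof (Hl a C1 bs_zero bs_zero H0 H0) as H. rewrite bs_scal1, bs_add0 in H.
  transitivity (Csub (Cadd (Cmul C1 (T a bs_zero)) (T a bs_zero)) (T a bs_zero)); [ring|].
  rewrite <- H. ring.
Qed.

Lemma cochain_sub_x n T a u v : is_cochain P n T -> P u -> P v ->
  T a (bs_sub u v) = Csub (T a u) (T a v).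
Proof.
  intros HT Hu Hv. destruct HT as [_ [Hl _]].
  rewrite sub_as_lin. rewrite Hl; auto.
  ring.
Qed.

Lemma cochain_bound_diff n T : is_cochain P n T -> exists K, 0 <= K /\
  forall a u v, P u -> P v -> Cmod (Csub (T a u) (T a v)) <= K * prod_norm a n * bs_norm (bs_sub u v).
Proof.
  intros HT. pose proof HT as [_ [_ [_ [K [HK Hb]]]]]. exists K; split; auto.
  intros a u v Hu Hv. rewrite <- (cochain_sub_x n); auto. apply Hb. apply submod_sub; auto.
Qed.

Lemma cochain_upd_sub n T i a u v x : is_cochain P n T -> (i < n)%nat -> P x ->
  T (upd a i v) x = Cadd (T (upd a i u) x) (T (upd a i (bs_sub v u)) x).
Proof.
  intros [_ [_ [Hm _]]] Hi Hx.
  replace (T (upd a i u) x) with (Cmul C1 (T (upd a i u) x)) by ring.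
  rewrite <- Hm by auto.
  rewrite bs_scal1, bs_addC, sub_addK. reflexivity.
Qed.

Lemma is_cochain_weaken (P' : X -> Prop) n T : (forall x, P' x -> P x) -> is_cochain P n T -> is_cochain P' n T.
Proof.
  intros Hw [H1 [H2 [H3 [K [HK H4]]]]]. repeat split; intros; auto.
  exists K; split; auto.
Qed.

Lemma is_cochain_ext n T S : (forall a x, P x -> T a x = S a x) -> is_cochain P n T -> is_cochain P n S.
Proof.
  intros He [H1 [H2 [H3 [K [HK H4]]]]].
  destruct HP as [_ [Hl _]].
  split; [|split; [|split]].
  - intros a b Hab x Hx. rewrite <- !He by auto. apply H1; auto.
  - intros a c x y Hx Hy. rewrite <- !He by auto. apply H2; auto.
  - intros i Hi a c u v x Hx. rewrite <- !He by auto. apply H3; auto.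
  - exists K; split; auto. intros a x Hx. rewrite <- He by auto. apply H4; auto.
Qed.

Lemma is_cochain_lin n c T S : is_cochain P n T -> is_cochain P n S ->
  is_cochain P n (fun a x => Cadd (Cmul c (T a x)) (S a x)).
Proof.
  intros [H1 [H2 [H3 [K [HK H4]]]]] [G1 [G2 [G3 [K' [HK' G4]]]]].
  split; [|split; [|split]].
  - intros a b Hab x Hx. rewrite (H1 a b), (G1 a b); auto.
  - intros a d x y Hx Hy. rewrite H2, G2 by auto. ring.
  - intros i Hi a d u v x Hx. rewrite H3, G3 by auto. ring.
  - exists (Cmod c * K + K'). split. pose proof (Cmod_ge0 c); nra.
    intros a x Hx. eapply Rle_trans; [apply Cmod_triangle|]. rewrite Cmod_mul.
    specialize (H4 a x Hx). specialize (G4 a x Hx). pose proof (Cmod_ge0 c).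
    pose proof (prod_norm_ge0 A a n). pose proof (bs_norm_ge0 _ x). nra.
Qed.

Lemma is_cochain_zero n : is_cochain P n (fun _ _ => C0).
Proof.
  split; [|split; [|split]]; intros; try ring; auto.
  exists 0. split; [lra|]. intros. rewrite Cmod_0. lra.
Qed.

End Coch.

Lemma delta_lin {A : BanachAlgebra} {X : BanachBimodule A} n (T S : Cochain X) c a x :
  delta n (fun a x => Cadd (Cmul c (T a x)) (S a x)) a x = Cadd (Cmul c (delta n T a x)) (delta n S a x).
Proof.
  unfold delta.
  rewrite (Csum1_ext _ (fun k => Cadd (Cmul c (Cmul (Csign k) (T (merge k a) x))) (Cmul (Csign k) (S (merge k a) x)))) by (intros; ring).
  rewrite Csum1_add, Csum1_scal. ring.
Qed.

Lemma delta_zero {A : BanachAlgebra} {X : BanachBimodule A} n a (x : X) :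
  delta n (fun _ _ => C0) a x = C0.
Proof. unfold delta. rewrite Csum1_zero by (intros; ring). ring. Qed.

Section CL.
Variable A : BanachAlgebra.
Variable X : BanachBimodule A.
Variable P : X -> Prop.
Hypothesis HP : submod A X P.

Lemma coboundary_weaken (P' : X -> Prop) n T : (forall x, P' x -> P x) ->
  coboundary P n T -> coboundary P' n T.
Proof.
  intros Hw [HT [S [HS HdS]]]. split. eapply is_cochain_weaken; eauto.
  exists S; split. eapply is_cochain_weaken; eauto. intros; apply HdS; auto.
Qed.

Lemma clB_weaken (P' : X -> Prop) n T : (forall x, P' x -> P x) ->
  strong_closure_B P n T -> strong_closure_B P' n T.
Proof.
  intros Hw [HT [I [le [S [Hd [HS Hc]]]]]]. split. eapply is_cochain_weaken; eauto.
  exists I, le, S. split; auto. split. intros i; eapply coboundary_weaken; eauto.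
  intros a eps Heps. destruct (Hc a eps Heps) as [i0 Hi0]. exists i0. intros; apply Hi0; auto.
Qed.

Lemma clB_zero_on n T : is_cochain P n T -> (forall a x, P x -> T a x = C0) -> strong_closure_B P n T.
Proof.
  intros HT Hz. split; auto.
  exists unit, (fun _ _ => True), (fun _ _ _ => C0).
  split. { split; [constructor; exact tt|]. split; [auto|]. split; [auto|]. intros; exists tt; auto. }
  split.
  - intros _. split. apply is_cochain_zero. exists (fun _ _ => C0). split. apply is_cochain_zero.
    intros; apply delta_zero.
  - intros a eps Heps. exists tt. intros _ _ x Hx. rewrite Hz by auto.
    replace (Csub C0 C0) with C0 by ring. rewrite Cmod_0. pose proof (bs_norm_ge0 _ x). nra.
Qed.

Lemma clB_ext n T S : (forall a x, P x -> T a x = S a x) -> strong_closure_B P n T -> strong_closure_B P n S.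
Proof.
  intros He [HT [I [le [F [Hd [HF Hc]]]]]]. split. eapply (is_cochain_ext A X P HP); eauto.
  exists I, le, F. split; auto. split; auto.
  intros a eps Heps. destruct (Hc a eps Heps) as [i0 Hi0]. exists i0. intros i Hi x Hx.
  rewrite <- He by auto. apply Hi0; auto.
Qed.

Lemma coboundary_add n T S : coboundary P n T -> coboundary P n S -> coboundary P n (cadd T S).
Proof.
  intros [HT [R [HR HdR]]] [HS [R' [HR' HdR']]].
  split.
  - apply (is_cochain_ext A X P HP n (fun a x => Cadd (Cmul C1 (T a x)) (S a x))); [|apply (is_cochain_lin A X P n C1 T S); auto].
    intros; unfold cadd; ring.
  - exists (fun a x => Cadd (Cmul C1 (R a x)) (R' a x)). split.
    apply is_cochain_lin; auto.
    intros a x Hx. rewrite delta_lin, HdR, HdR' by auto. unfold cadd; ring.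
Qed.

Lemma clB_add n T S : strong_closure_B P n T -> strong_closure_B P n S -> strong_closure_B P n (cadd T S).
Proof.
  intros [HT [I1 [le1 [F1 [[[i1] [r1 [t1 d1]]] [HF1 Hc1]]]]]] [HS [I2 [le2 [F2 [[[i2] [r2 [t2 d2]]] [HF2 Hc2]]]]]].
  split.
  { apply (is_cochain_ext A X P HP n (fun a x => Cadd (Cmul C1 (T a x)) (S a x))); [|apply (is_cochain_lin A X P n C1 T S); auto].
    intros; unfold cadd; ring. }
  exists (I1 * I2)%type, (fun p q => le1 (fst p) (fst q) /\ le2 (snd p) (snd q)),
    (fun p => cadd (F1 (fst p)) (F2 (snd p))).
  split.
  { split; [constructor; exact (i1, i2)|]. split; [intros [p q]; simpl; auto|].
    split; [intros [p1 p2] [q1 q2] [s1 s2]; simpl; intros [] []; eauto|].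
    intros [p1 p2] [q1 q2]. destruct (d1 p1 q1) as [k1 [? ?]]. destruct (d2 p2 q2) as [k2 [? ?]].
    exists (k1, k2); simpl; auto. }
  split.
  { intros [p q]; simpl. apply coboundary_add; auto. }
  intros a eps Heps.
  destruct (Hc1 a (eps/2) ltac:(lra)) as [j1 Hj1].
  destruct (Hc2 a (eps/2) ltac:(lra)) as [j2 Hj2].
  exists (j1, j2). intros [p q] [Hp Hq] x Hx; simpl in *.
  specialize (Hj1 p Hp x Hx). specialize (Hj2 q Hq x Hx).
  unfold cadd.
  replace (Csub (Cadd (F1 p a x) (F2 q a x)) (Cadd (T a x) (S a x))) with
    (Cadd (Csub (F1 p a x) (T a x)) (Csub (F2 q a x) (S a x))) by ring.
  eapply Rle_trans; [apply Cmod_triangle|]. lra.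
Qed.

End CL.

Section TLS.
Variable I : Type.
Variable le : I -> I -> Prop.
Variable U : (I -> Prop) -> Prop.
Hypothesis HT : U (fun _ => True).
Hypothesis HF : ~ U (fun _ => False).
Hypothesis HS : forall A B : I -> Prop, U A -> (forall x, A x -> B x) -> U B.
Hypothesis HI : forall A B : I -> Prop, U A -> U B -> U (fun x => A x /\ B x).
Hypothesis HUlt : forall A : I -> Prop, U A \/ U (fun x => ~ A x).
Hypothesis Htail : forall i0, U (fun i => le i0 i).

Lemma cv_add f g L M : convC I U f L -> convC I U g M -> convC I U (fun j => Cadd (f j) (g j)) (Cadd L M).
Proof. apply convC_add; auto. Qed.
Lemma cv_scal c f L : convC I U f L -> convC I U (fun j => Cmul c (f j)) (Cmul c L).
Proof. apply convC_scal; auto. Qed.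
Lemma cv_ext f g L : (forall j, f j = g j) -> convC I U f L -> convC I U g L.
Proof. apply convC_ext; auto. Qed.
Lemma cv_tail f g L : convC I U f L ->
  (forall eps, eps > 0 -> exists j0, forall j, le j0 j -> Cmod (Csub (g j) (f j)) < eps) -> convC I U g L.
Proof. apply convC_tail; auto. Qed.
Lemma cv_sum (F : nat -> I -> Defs.C) L m : (forall k, convC I U (F k) (L k)) ->
  convC I U (fun j => Csum1 (fun k => F k j) m) (Csum1 L m).
Proof. apply convC_Csum1; auto. Qed.
Lemma cv_bound f L B : convC I U f L -> (forall j, Cmod (f j) <= B) -> Cmod L <= B.
Proof. apply convC_bound; auto. Qed.
Lemma ul_conv f : boundedC I f -> convC I U f (ulim I U f).
Proof. apply ulim_conv; auto. Qed.
Lemma ul_eq f L : convC I U f L -> ulim I U f = L.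
Proof. apply ulim_eq; auto. Qed.

Lemma tail_from_norm {V : BanachSpace} (h f : I -> Defs.C) (d : I -> V) K : 0 <= K ->
  (forall j, Cmod (Csub (h j) (f j)) <= K * bs_norm (d j)) ->
  (forall eps, eps > 0 -> exists j0, forall j, le j0 j -> bs_norm (d j) < eps) ->
  forall eps, eps > 0 -> exists j0, forall j, le j0 j -> Cmod (Csub (h j) (f j)) < eps.
Proof.
  intros HK Hb Hd eps Heps.
  assert (Hp : 0 < eps / (K + 1)) by (apply Rdiv_lt_0_compat; lra).
  destruct (Hd _ Hp) as [j0 Hj0]. exists j0. intros j Hj.
  eapply Rle_lt_trans; [apply Hb|]. specialize (Hj0 j Hj).
  apply Rle_lt_trans with (K * (eps / (K + 1))). pose proof (bs_norm_ge0 _ (d j)); nra.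
  replace eps with ((K + 1) * (eps / (K + 1))) at 2 by (field; lra). nra.
Qed.

Variable A : BanachAlgebra.
Variable X : BanachBimodule A.
Variable P : X -> Prop.
Hypothesis HP : submod A X P.
Variable g : I -> X -> X.
Hypothesis Hg_add : forall j x y, g j (bs_add x y) = bs_add (g j x) (g j y).
Hypothesis Hg_scal : forall j c x, g j (bs_scal c x) = bs_scal c (g j x).
Variable M : R.
Hypothesis HM : 0 <= M.
Hypothesis Hg_bnd : forall j x, bs_norm (g j x) <= M * bs_norm x.
Hypothesis Hg_P : forall j x, P (g j x).
Hypothesis Hg_R : forall x c eps, eps > 0 -> exists j0, forall j, le j0 j ->
  bs_norm (bs_sub (g j (ract x c)) (ract (g j x) c)) < eps.
Hypothesis Hg_L : forall x c eps, eps > 0 -> exists j0, forall j, le j0 j ->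
  bs_norm (bs_sub (g j (lact c x)) (lact c (g j x))) < eps.

Definition TL (T : Cochain X) : Cochain X := fun a x => ulim I U (fun j => T a (g j x)).

Lemma TL_conv n T a x : is_cochain P n T -> convC I U (fun j => T a (g j x)) (TL T a x).
Proof.
  intros [_ [_ [_ [K [HK Hb]]]]]. apply ul_conv.
  exists (K * prod_norm a n * (M * bs_norm x)). intros j.
  eapply Rle_trans; [apply Hb; auto|]. apply Rmult_le_compat_l; auto.
  pose proof (prod_norm_ge0 A a n); nra.
Qed.

Lemma TL_cochain n T : is_cochain P n T -> is_cochain (fun _ => True) n (TL T).
Proof.
  intros HTc. pose proof HTc as [H1 [H2 [H3 [K [HK H4]]]]].
  split; [|split; [|split]].
  - intros a b Hab x _. unfold TL. f_equal. apply functional_extensionality; intros j.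
    apply H1; auto.
  - intros a c x y _ _. apply ul_eq.
    apply (cv_ext (fun j => Cadd (Cmul c (T a (g j x))) (T a (g j y)))).
    + intros j. rewrite Hg_add, Hg_scal. rewrite H2; auto.
    + apply cv_add; [apply cv_scal|]; apply (TL_conv n); auto.
  - intros i Hi a c u v x _. apply ul_eq.
    apply (cv_ext (fun j => Cadd (Cmul c (T (upd a i u) (g j x))) (T (upd a i v) (g j x)))).
    + intros j. rewrite H3; auto.
    + apply cv_add; [apply cv_scal|]; apply (TL_conv n); auto.
  - exists (K * M). split; [nra|]. intros a x _.
    apply (cv_bound (fun j => T a (g j x))). apply (TL_conv n); auto.
    intros j. eapply Rle_trans; [apply H4; auto|].
    pose proof (prod_norm_ge0 A a n). pose proof (bs_norm_ge0 _ x).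
    pose proof (Hg_bnd j x) as G. assert (0 <= K * prod_norm a n) by nra.
    apply Rle_trans with (K * prod_norm a n * (M * bs_norm x)). apply Rmult_le_compat_l; auto.
    nra.
Qed.

Lemma TL_delta n T a x : is_cochain P n T -> delta n (TL T) a x = TL (delta n T) a x.
Proof.
  intros HTc. symmetry. apply ul_eq.
  destruct (cochain_bound_diff A X P HP n T HTc) as [K [HK Hb]].
  destruct HP as [_ [_ [HPl HPr]]].
  unfold delta.
  apply cv_add; [apply cv_add|].
  - apply (cv_tail (fun j => T (shift a) (g j (ract x (a O))))).
    + apply (TL_conv n); auto.
    + apply (tail_from_norm _ _ (fun j => bs_sub (ract (g j x) (a O)) (g j (ract x (a O)))) (K * prod_norm (shift a) n)).
      * pose proof (prod_norm_ge0 A (shift a) n); nra.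
      * intros j. apply Hb; auto.
      * intros eps Heps. destruct (Hg_R x (a O) eps Heps) as [j0 Hj0]. exists j0. intros j Hj.
        rewrite norm_sub_sym. auto.
  - apply (cv_sum (fun k j => Cmul (Csign k) (T (merge k a) (g j x)))).
    intros k. apply cv_scal. apply (TL_conv n); auto.
  - apply cv_scal.
    apply (cv_tail (fun j => T a (g j (lact (a n) x)))).
    + apply (TL_conv n); auto.
    + apply (tail_from_norm _ _ (fun j => bs_sub (lact (a n) (g j x)) (g j (lact (a n) x))) (K * prod_norm a n)).
      * pose proof (prod_norm_ge0 A a n); nra.
      * intros j. apply Hb; auto.
      * intros eps Heps. destruct (Hg_L x (a n) eps Heps) as [j0 Hj0]. exists j0. intros j Hj.
        rewrite norm_sub_sym. auto.
Qed.

Lemma TL_cocycle n T : cocycle P n T -> cocycle (fun _ => True) n (TL T).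
Proof.
  intros [HTc Hd]. split. apply (TL_cochain n); auto.
  intros a x _. rewrite (TL_delta n) by auto. unfold TL.
  transitivity (ulim I U (fun _ => C0)).
  - f_equal. apply functional_extensionality; intros j. apply Hd; auto.
  - apply ul_eq. apply convC_const; auto.
Qed.

Lemma TL_close n T S eps a x : is_cochain P n T -> is_cochain P n S -> 0 <= eps ->
  (forall y, P y -> Cmod (Csub (S a y) (T a y)) <= eps * bs_norm y) ->
  Cmod (Csub (TL S a x) (TL T a x)) <= eps * M * bs_norm x.
Proof.
  intros HT' HS' He Hy.
  apply (cv_bound (fun j => Csub (S a (g j x)) (T a (g j x)))).
  - apply (cv_ext (fun j => Cadd (Cmul C1 (S a (g j x))) (Cmul (Copp C1) (T a (g j x))))).
    + intros j; unfold Csub; ring.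
    + replace (Csub (TL S a x) (TL T a x)) with (Cadd (Cmul C1 (TL S a x)) (Cmul (Copp C1) (TL T a x))) by (unfold Csub; ring).
      apply cv_add; apply cv_scal; apply (TL_conv n); auto.
  - intros j. eapply Rle_trans; [apply Hy; auto|].
    pose proof (Hg_bnd j x) as G. pose proof (bs_norm_ge0 _ x). nra.
Qed.

End TLS.

Ltac natcase :=
  repeat match goal with
  | |- context [Nat.ltb ?x ?y] => destruct (Nat.ltb_spec x y)
  | |- context [Nat.eqb ?x ?y] => destruct (Nat.eqb_spec x y)
  end;
  try (exfalso; lia);
  try reflexivity;
  try solve [f_equal; lia | f_equal; f_equal; lia | f_equal; [f_equal; lia|f_equal; lia]].

Section Slot.
Variable A : BanachAlgebra.
Variable X : BanachBimodule A.
Variable P : X -> Prop.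

Lemma upd_upd_same {T : Type} (a : nat -> T) i u v : upd (upd a i u) i v = upd a i v.
Proof. apply functional_extensionality; intros j. unfold upd. natcase. Qed.
Lemma upd_upd_comm {T : Type} (a : nat -> T) i j u v : i <> j -> upd (upd a i u) j v = upd (upd a j v) i u.
Proof. intros H. apply functional_extensionality; intros k. unfold upd. natcase. Qed.

Lemma cochain_slot n T i (phi : A -> A) L :
  is_cochain P n T -> (i < n)%nat -> 0 <= L ->
  (forall c u v, phi (bs_add (bs_scal c u) v) = bs_add (bs_scal c (phi u)) (phi v)) ->
  (forall u, bs_norm (phi u) <= L * bs_norm u) ->
  is_cochain P n (fun a x => T (upd a i (phi (a i))) x).
Proof.
  intros [H1 [H2 [H3 [K [HK H4]]]]] Hi HL Hphi Hb.
  split; [|split; [|split]].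
  - intros a b Hab x Hx. apply H1; auto. intros j Hj. unfold upd. natcase. subst. rewrite Hab; auto.
    apply Hab; auto.
  - intros; apply H2; auto.
  - intros i' Hi' a c u v x Hx.
    destruct (Nat.eq_dec i' i) as [->|Hne].
    + assert (E : forall w, upd a i w i = w) by (intros; unfold upd; rewrite Nat.eqb_refl; auto).
      rewrite !E. rewrite !upd_upd_same. rewrite Hphi. apply H3; auto.
    + assert (E : forall w, upd a i' w i = a i) by (intros; unfold upd; natcase).
      rewrite !E. rewrite !(upd_upd_comm _ i' i) by auto. apply H3; auto.
  - exists (K * L). split; [nra|]. intros a x Hx.
    eapply Rle_trans; [apply H4; auto|].
    destruct (prod_norm_upd A a n i Hi) as [Q [HQ HQe]].
    rewrite HQe. assert (Ea : prod_norm a n = Q * bs_norm (a i)) by (rewrite <- HQe, upd_same; auto).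
    rewrite Ea.
    pose proof (Hb (a i)). pose proof (bs_norm_ge0 _ x). pose proof (bs_norm_ge0 _ (a i)).
    pose proof (bs_norm_ge0 _ (phi (a i))).
    assert (K * (Q * bs_norm (phi (a i))) <= K * (Q * (L * bs_norm (a i)))).
    { apply Rmult_le_compat_l; auto. apply Rmult_le_compat_l; auto. }
    nra.
Qed.

Lemma cochain_cons m T (e : A) :
  is_cochain P (S m) T -> is_cochain P m (fun a x => T (ccons e a) x).
Proof.
  intros [H1 [H2 [H3 [K [HK H4]]]]].
  split; [|split; [|split]].
  - intros a b Hab x Hx. apply H1; auto. intros [|j] Hj; simpl; auto. apply Hab; lia.
  - intros; apply H2; auto.
  - intros i Hi a c u v x Hx.
    assert (E : forall w, ccons e (upd a i w) = upd (ccons e a) (S i) w).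
    { intros w. apply functional_extensionality; intros [|j]; unfold upd; simpl; auto. }
    rewrite !E. apply H3; auto. lia.
  - exists (K * bs_norm e). split. pose proof (bs_norm_ge0 _ e); nra.
    intros a x Hx. eapply Rle_trans; [apply H4; auto|]. rewrite prod_norm_cons. nra.
Qed.

Lemma cochain_last m T (e : A) :
  is_cochain P (S m) T -> is_cochain P m (fun a x => T (upd a m e) x).
Proof.
  intros [H1 [H2 [H3 [K [HK H4]]]]].
  split; [|split; [|split]].
  - intros a b Hab x Hx. apply H1; auto. intros j Hj. unfold upd. natcase. apply Hab; lia.
  - intros; apply H2; auto.
  - intros i Hi a c u v x Hx.
    rewrite !(upd_upd_comm _ i m) by lia. apply H3; auto.
  - exists (K * bs_norm e). split. pose proof (bs_norm_ge0 _ e); nra.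
    intros a x Hx. eapply Rle_trans; [apply H4; auto|]. simpl.
    rewrite (prod_norm_ext _ (upd a m e) a) by (intros j Hj; unfold upd; natcase).
    assert (E : upd a m e m = e) by (unfold upd; rewrite Nat.eqb_refl; auto). rewrite E. pose proof (prod_norm_ge0 A a m).
    pose proof (bs_norm_ge0 _ x). nra.
Qed.

Lemma cochain_scal n c T : is_cochain P n T -> is_cochain P n (fun a x => Cmul c (T a x)).
Proof.
  intros [H1 [H2 [H3 [K [HK H4]]]]].
  split; [|split; [|split]].
  - intros a b Hab x Hx. rewrite (H1 a b); auto.
  - intros a d x y Hx Hy. rewrite H2 by auto. ring.
  - intros i Hi a d u v x Hx. rewrite H3 by auto. ring.
  - exists (Cmod c * K). split. pose proof (Cmod_ge0 c); nra.
    intros a x Hx. rewrite Cmod_mul. specialize (H4 a x Hx). pose proof (Cmod_ge0 c).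
    pose proof (prod_norm_ge0 A a n). pose proof (bs_norm_ge0 _ x). nra.
Qed.

End Slot.

Lemma Csign0 : Csign 0 = C1.
Proof. apply Ceq; simpl; ring. Qed.

Section Merge.
Variable A : BanachAlgebra.

Lemma merge1_cons (e : A) a : merge 1 (ccons e a) = upd a 0 (ba_mul e (a 0%nat)).
Proof. apply functional_extensionality; intros [|i]; unfold merge, upd; simpl; reflexivity. Qed.

Lemma mergeS_cons (e : A) a k : (1 <= k)%nat -> merge (S k) (ccons e a) = ccons e (merge k a).
Proof.
  intros Hk. apply functional_extensionality; intros [|i]; unfold merge; simpl.
  - destruct k; [lia|]. reflexivity.
  - replace (k - 0)%nat with k by lia.
    natcase; try (destruct k; [lia|]); simpl in *; natcase.
Qed.
End Merge.

Section DL.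
Variable A : BanachAlgebra.
Variable X : BanachBimodule A.

Lemma delta_left m (T : Cochain X) (e : A) :
  cocycle (fun _ => True) (S m) T -> (forall a x c, T a (ract x c) = C0) ->
  forall a x, delta m (fun a x => Cmul (Copp C1) (T (ccons e a) x)) a x = T (upd a 0 (ba_mul e (a 0%nat))) x.
Proof.
  intros [HTc Hd] Hz a x.
  pose proof (Hd (ccons e a) x I) as H. unfold delta in H |- *.
  change (shift (ccons e a)) with a in H. simpl ccons in H.
  rewrite Hz in H. rewrite Hz.
  rewrite Csum1_shift in H. rewrite merge1_cons in H.
  rewrite (Csum1_ext (fun k => Cmul (Csign (S k)) (T (merge (S k) (ccons e a)) x))
             (fun k => Cmul (Copp C1) (Cmul (Csign k) (T (ccons e (merge k a)) x)))) in H.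
  2:{ intros k Hk. rewrite mergeS_cons by lia. rewrite Csign_S. ring. }
  rewrite Csum1_scal in H.
  rewrite (Csum1_ext (fun k => Cmul (Csign k) (Cmul (Copp C1) (T (ccons e (merge k a)) x)))
             (fun k => Cmul (Copp C1) (Cmul (Csign k) (T (ccons e (merge k a)) x)))) by (intros; ring).
  rewrite Csum1_scal.
  rewrite !Csign_S in *. rewrite Csign0 in *.
  set (Sg := Csum1 (fun k => Cmul (Csign k) (T (ccons e (merge k a)) x)) m) in *.
  set (u := T (upd a 0 (ba_mul e (a 0%nat))) x) in *.
  set (l := T (ccons e a) (lact (a m) x)) in *.
  transitivity (Cadd (Csub (Cadd (Cadd (Cmul (Copp C1) C0) (Cmul (Copp C1) Sg)) (Cmul (Copp (Csign m)) (Cmul (Copp C1) l))) u) u); [ring|].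
  replace (Csub (Cadd (Cadd (Cmul (Copp C1) C0) (Cmul (Copp C1) Sg)) (Cmul (Copp (Csign m)) (Cmul (Copp C1) l))) u)
    with (Cadd (Cadd C0 (Cadd (Cmul (Copp C1) u) (Cmul (Copp C1) Sg))) (Cmul (Copp (Copp (Csign m))) l)) by ring.
  rewrite H. ring.
Qed.
End DL.

Section DR.
Variable A : BanachAlgebra.
Variable X : BanachBimodule A.

Lemma merge_upd_last m k (a : nat -> A) e : (1 <= k <= m)%nat ->
  forall i, (i < S m)%nat -> merge k (upd a (S m) e) i = upd (merge k a) m e i.
Proof.
  intros Hk i Hi. unfold merge, upd. natcase.
Qed.

Lemma merge_upd_top m (a : nat -> A) e :
  forall i, (i < S m)%nat -> merge (S m) (upd a (S m) e) i = upd a m (ba_mul (a m) e) i.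
Proof.
  intros i Hi. unfold merge, upd. replace (S m - 1)%nat with m by lia. natcase.
Qed.

Lemma delta_right m (T : Cochain X) (e : A) :
  cocycle (fun _ => True) (S m) T -> (forall a x c, T a (lact c x) = C0) ->
  forall a x, delta m (fun a x => Cmul (Copp (Csign (S m))) (T (upd a m e) x)) a x
     = T (upd a m (ba_mul (a m) e)) x.
Proof.
  intros [HTc Hd] Hz a x.
  pose proof HTc as [H1 _].
  pose proof (Hd (upd a (S m) e) x I) as H. unfold delta in H |- *.
  rewrite Hz in H. rewrite Hz.
  change (upd a (S m) e 0%nat) with (a 0%nat) in H.
  assert (Es : shift (upd a (S m) e) = upd (shift a) m e).
  { apply functional_extensionality; intros i. reflexivity. }
  rewrite Es in H.
  change (Csum1 (fun k => Cmul (Csign k) (T (merge k (upd a (S m) e)) x)) (S m)) with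
    (Cadd (Csum1 (fun k => Cmul (Csign k) (T (merge k (upd a (S m) e)) x)) m)
          (Cmul (Csign (S m)) (T (merge (S m) (upd a (S m) e)) x))) in H.
  rewrite (Csum1_ext (fun k => Cmul (Csign k) (T (merge k (upd a (S m) e)) x))
            (fun k => Cmul (Csign k) (T (upd (merge k a) m e) x))) in H.
  2:{ intros k Hk. f_equal. apply H1; auto. intros i Hi. apply merge_upd_last; auto. }
  rewrite (H1 (merge (S m) (upd a (S m) e)) (upd a m (ba_mul (a m) e))) in H
    by (auto; apply merge_upd_top).
  rewrite (Csum1_ext (fun k => Cmul (Csign k) (Cmul (Copp (Csign (S m))) (T (upd (merge k a) m e) x)))
             (fun k => Cmul (Copp (Csign (S m))) (Cmul (Csign k) (T (upd (merge k a) m e) x)))) by (intros; ring).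
  rewrite Csum1_scal.
  pose proof (Csign_sq (S m)) as Hs.
  set (s := Csign (S m)) in *.
  set (Sg := Csum1 (fun k => Cmul (Csign k) (T (upd (merge k a) m e) x)) m) in *.
  set (u := T (upd a m (ba_mul (a m) e)) x) in *.
  set (t0 := T (upd (shift a) m e) (ract x (a 0%nat))) in *.
  transitivity (Cadd (Cmul (Copp s) (Cadd (Cadd t0 (Cadd Sg (Cmul s u))) (Cmul (Csign (S (S m))) C0))) (Cmul (Cmul s s) u)); [ring|].
  rewrite H, Hs. ring.
Qed.
End DR.

Section Approx.
Variable A : BanachAlgebra.
Variable X : BanachBimodule A.
Variable I : Type.
Variable le : I -> I -> Prop.
Variable e : I -> A.
Variable Ke : R.
Hypothesis Hdir : directed I le.
Hypothesis HKe : 0 <= Ke.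
Hypothesis HeK : forall i, bs_norm (e i) <= Ke.
Hypothesis Hbai : forall (a : A) eps, eps > 0 -> exists i0, forall i, le i0 i ->
      bs_norm (bs_sub (ba_mul (e i) a) a) < eps /\
      bs_norm (bs_sub (ba_mul a (e i)) a) < eps.

Lemma approx_est n (T : Cochain X) j (w : I -> A) (a : nat -> A) :
  is_cochain (fun _ => True) n T -> (j < n)%nat ->
  (forall eps, eps > 0 -> exists i0, forall i, le i0 i -> bs_norm (bs_sub (w i) (a j)) < eps) ->
  forall eps, eps > 0 -> exists i0, forall i, le i0 i -> forall x : X, True ->
    Cmod (Csub (T (upd a j (w i)) x) (T a x)) <= eps * bs_norm x.
Proof.
  intros HTc Hj Hw eps Heps.
  pose proof HTc as [_ [_ [_ [K [HK Hb]]]]].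
  destruct (prod_norm_upd A a n j Hj) as [Q [HQ HQe]].
  assert (Hp : 0 < eps / (K * Q + 1)) by (apply Rdiv_lt_0_compat; nra).
  destruct (Hw _ Hp) as [i0 Hi0]. exists i0. intros i Hi x _.
  rewrite (cochain_upd_sub A X (fun _ => True) n T j a (a j) (w i) x HTc Hj Logic.I).
  rewrite upd_same.
  replace (Csub (Cadd (T a x) (T (upd a j (bs_sub (w i) (a j))) x)) (T a x))
    with (T (upd a j (bs_sub (w i) (a j))) x) by ring.
  eapply Rle_trans; [apply Hb; auto|]. rewrite HQe.
  specialize (Hi0 i Hi). pose proof (bs_norm_ge0 _ x).
  pose proof (bs_norm_ge0 _ (bs_sub (w i) (a j))).
  assert (K * (Q * bs_norm (bs_sub (w i) (a j))) <= eps).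
  { apply Rle_trans with ((K * Q + 1) * (eps / (K * Q + 1))).
    - assert (0 <= K * Q) by nra. nra.
    - right. field. nra. }
  nra.
Qed.

Lemma clB_left m (T : Cochain X) :
  cocycle (fun _ => True) (S m) T -> (forall a x c, T a (ract x c) = C0) ->
  strong_closure_B (fun _ => True) (S m) T.
Proof.
  intros HTcc Hz. pose proof HTcc as [HTc _].
  split; auto.
  exists I, le, (fun k a x => T (upd a 0 (ba_mul (e k) (a 0%nat))) x).
  split; auto. split.
  - intros k. split.
    + apply (cochain_slot A X _ (S m) T 0 (fun u => ba_mul (e k) u) Ke); [auto|lia|auto| |].
      * intros c u v. rewrite ba_mulDr, ba_mulZr. reflexivity.
      * intros u. eapply Rle_trans; [apply ba_normM|]. pose proof (bs_norm_ge0 _ u). specialize (HeK k). nra.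
    + exists (fun a x => Cmul (Copp C1) (T (ccons (e k) a) x)). split.
      * apply cochain_scal. apply cochain_cons. auto.
      * intros a x _. simpl. apply delta_left; auto.
  - intros a eps Heps.
    apply (approx_est (S m) T 0 (fun i => ba_mul (e i) (a 0%nat)) a HTc); [lia| |auto].
    intros eps' He'. destruct (Hbai (a 0%nat) eps' He') as [i0 Hi0]. exists i0. intros i Hi. apply Hi0; auto.
Qed.

Lemma clB_right m (T : Cochain X) :
  cocycle (fun _ => True) (S m) T -> (forall a x c, T a (lact c x) = C0) ->
  strong_closure_B (fun _ => True) (S m) T.
Proof.
  intros HTcc Hz. pose proof HTcc as [HTc _].
  split; auto.
  exists I, le, (fun k a x => T (upd a m (ba_mul (a m) (e k))) x).
  split; auto. split.
  - intros k. split.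
    + apply (cochain_slot A X _ (S m) T m (fun u => ba_mul u (e k)) Ke); [auto|lia|auto| |].
      * intros c u v. rewrite ba_mulDl, ba_mulZl. reflexivity.
      * intros u. eapply Rle_trans; [apply ba_normM|]. pose proof (bs_norm_ge0 _ u). specialize (HeK k). nra.
    + exists (fun a x => Cmul (Copp (Csign (S m))) (T (upd a m (e k)) x)). split.
      * apply cochain_scal. apply cochain_last. auto.
      * intros a x _. simpl. apply delta_right; auto.
  - intros a eps Heps.
    apply (approx_est (S m) T m (fun i => ba_mul (a m) (e i)) a HTc); [lia| |auto].
    intros eps' He'. destruct (Hbai (a m) eps' He') as [i0 Hi0]. exists i0. intros i Hi. apply Hi0; auto.
Qed.

End Approx.

Lemma small_from {I : Type} (le : I -> I -> Prop) {V W : BanachSpace} (d : I -> V) (w : I -> W) C :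
  0 <= C -> (forall j, bs_norm (d j) <= C * bs_norm (w j)) ->
  (forall eps, eps > 0 -> exists j0, forall j, le j0 j -> bs_norm (w j) < eps) ->
  forall eps, eps > 0 -> exists j0, forall j, le j0 j -> bs_norm (d j) < eps.
Proof.
  intros HC Hb Hw eps Heps.
  assert (Hp : 0 < eps / (C + 1)) by (apply Rdiv_lt_0_compat; lra).
  destruct (Hw _ Hp) as [j0 Hj0]. exists j0. intros j Hj.
  eapply Rle_lt_trans; [apply Hb|]. specialize (Hj0 j Hj).
  apply Rle_lt_trans with (C * (eps / (C + 1))). pose proof (bs_norm_ge0 _ (w j)); nra.
  replace eps with ((C + 1) * (eps / (C + 1))) at 2 by (field; lra). nra.
Qed.

Section Main.
Variable A : BanachAlgebra.
Variable X : BanachBimodule A.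
Variable I : Type.
Variable le : I -> I -> Prop.
Variable e : I -> A.
Variable Ke : R.
Hypothesis Hdir : directed I le.
Hypothesis HKe : 0 <= Ke.
Hypothesis HeK : forall i, bs_norm (e i) <= Ke.
Hypothesis Hbai : forall (a : A) eps, eps > 0 -> exists i0, forall i, le i0 i ->
      bs_norm (bs_sub (ba_mul (e i) a) a) < eps /\
      bs_norm (bs_sub (ba_mul a (e i)) a) < eps.
Variable Kact : R.
Hypothesis HKact : 0 <= Kact.
Hypothesis Hact : forall (a : A) (x : X),
  bs_norm (lact a x) <= Kact * bs_norm a * bs_norm x /\
  bs_norm (ract x a) <= Kact * bs_norm a * bs_norm x.

Lemma lact_bnd a (x : X) : bs_norm (lact a x) <= Kact * bs_norm a * bs_norm x.
Proof. apply Hact. Qed.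
Lemma ract_bnd a (x : X) : bs_norm (ract x a) <= Kact * bs_norm a * bs_norm x.
Proof. apply Hact. Qed.

Lemma comm_small (c : A) : forall eps, eps > 0 -> exists j0, forall j, le j0 j ->
  bs_norm (bs_sub (ba_mul c (e j)) (ba_mul (e j) c)) < eps.
Proof.
  intros eps Heps. destruct (Hbai c (eps/2) ltac:(lra)) as [j0 Hj0]. exists j0. intros j Hj.
  destruct (Hj0 j Hj) as [H1 H2].
  eapply Rle_lt_trans; [apply (norm_sub_tri _ _ c)|]. rewrite (norm_sub_sym _ c). lra.
Qed.

Definition g1 (j : I) (x : X) : X := ract x (e j).
Definition g2 (j : I) (x : X) : X := lact (e j) (ract x (e j)).

Lemma g1_add j x y : g1 j (bs_add x y) = bs_add (g1 j x) (g1 j y).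
Proof. apply ract_Dl. Qed.
Lemma g1_scal j c x : g1 j (bs_scal c x) = bs_scal c (g1 j x).
Proof. apply ract_Zl. Qed.
Lemma g1_bnd j x : bs_norm (g1 j x) <= Kact * Ke * bs_norm x.
Proof.
  unfold g1. eapply Rle_trans; [apply ract_bnd|]. pose proof (HeK j). pose proof (bs_norm_ge0 _ x).
  pose proof (bs_norm_ge0 _ (e j)). apply Rmult_le_compat_r; auto. apply Rmult_le_compat_l; auto.
Qed.
Lemma g1_R : forall x c eps, eps > 0 -> exists j0, forall j, le j0 j ->
  bs_norm (bs_sub (g1 j (ract x c)) (ract (g1 j x) c)) < eps.
Proof.
  intros x c. apply (small_from le _ (fun j => bs_sub (ba_mul c (e j)) (ba_mul (e j) c)) (Kact * bs_norm x)).
  - pose proof (bs_norm_ge0 _ x); nra.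
  - intros j. unfold g1. rewrite <- !ract_M, <- ract_sub_r. eapply Rle_trans; [apply ract_bnd|]. lra.
  - apply comm_small.
Qed.
Lemma g1_L : forall x c eps, eps > 0 -> exists j0, forall j, le j0 j ->
  bs_norm (bs_sub (g1 j (lact c x)) (lact c (g1 j x))) < eps.
Proof.
  intros x c eps Heps. destruct Hdir as [[j0] _]. exists j0. intros j _. unfold g1.
  rewrite lract, subrr, norm0. lra.
Qed.

Lemma g2_add j x y : g2 j (bs_add x y) = bs_add (g2 j x) (g2 j y).
Proof. unfold g2. rewrite ract_Dl, lact_Dr. reflexivity. Qed.
Lemma g2_scal j c x : g2 j (bs_scal c x) = bs_scal c (g2 j x).
Proof. unfold g2. rewrite ract_Zl, lact_Zr. reflexivity. Qed.
Lemma g2_bnd j x : bs_norm (g2 j x) <= (Kact * Ke * (Kact * Ke)) * bs_norm x.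
Proof.
  unfold g2. eapply Rle_trans; [apply lact_bnd|]. pose proof (HeK j). pose proof (bs_norm_ge0 _ x).
  pose proof (bs_norm_ge0 _ (e j)). pose proof (ract_bnd (e j) x).
  pose proof (bs_norm_ge0 _ (ract x (e j))).
  apply Rle_trans with (Kact * Ke * bs_norm (ract x (e j))).
  - apply Rmult_le_compat_r; auto. apply Rmult_le_compat_l; auto.
  - apply Rle_trans with (Kact * Ke * (Kact * bs_norm (e j) * bs_norm x)).
    + apply Rmult_le_compat_l; auto. nra.
    + assert (Kact * bs_norm (e j) * bs_norm x <= Kact * Ke * bs_norm x).
      { apply Rmult_le_compat_r; auto. apply Rmult_le_compat_l; auto. }
      assert (0 <= Kact * Ke) by nra. nra.
Qed.
Lemma g2_X1 j x : X1 X (g2 j x).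
Proof. apply X1_gen. Qed.
Lemma g2_R : forall x c eps, eps > 0 -> exists j0, forall j, le j0 j ->
  bs_norm (bs_sub (g2 j (ract x c)) (ract (g2 j x) c)) < eps.
Proof.
  intros x c. apply (small_from le _ (fun j => bs_sub (ba_mul c (e j)) (ba_mul (e j) c)) (Kact * Ke * (Kact * bs_norm x))).
  - pose proof (bs_norm_ge0 _ x). repeat apply Rmult_le_pos; auto.
  - intros j. unfold g2. rewrite lract, <- !ract_M, <- lact_sub_r, <- ract_sub_r.
    set (w := bs_sub (ba_mul c (e j)) (ba_mul (e j) c)).
    eapply Rle_trans; [apply lact_bnd|]. pose proof (ract_bnd w x). pose proof (HeK j).
    pose proof (bs_norm_ge0 _ (e j)). pose proof (bs_norm_ge0 _ (ract x w)).
    pose proof (bs_norm_ge0 _ x). pose proof (bs_norm_ge0 _ w).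
    apply Rle_trans with (Kact * Ke * bs_norm (ract x w)).
    + apply Rmult_le_compat_r; auto. apply Rmult_le_compat_l; auto.
    + assert (0 <= Kact * Ke) by nra.
      apply Rle_trans with (Kact * Ke * (Kact * bs_norm w * bs_norm x)).
      apply Rmult_le_compat_l; auto. right; ring.
  - apply comm_small.
Qed.
Lemma g2_L : forall x c eps, eps > 0 -> exists j0, forall j, le j0 j ->
  bs_norm (bs_sub (g2 j (lact c x)) (lact c (g2 j x))) < eps.
Proof.
  intros x c. apply (small_from le _ (fun j => bs_sub (ba_mul (e j) c) (ba_mul c (e j))) (Kact * (Kact * Ke * bs_norm x))).
  - pose proof (bs_norm_ge0 _ x). repeat apply Rmult_le_pos; auto.
  - intros j. unfold g2. rewrite lract, <- !lact_M, <- lact_sub_l.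
    set (w := bs_sub (ba_mul (e j) c) (ba_mul c (e j))).
    eapply Rle_trans; [apply lact_bnd|]. pose proof (ract_bnd (e j) x). pose proof (HeK j).
    pose proof (bs_norm_ge0 _ (e j)). pose proof (bs_norm_ge0 _ (ract x (e j))).
    pose proof (bs_norm_ge0 _ x). pose proof (bs_norm_ge0 _ w).
    assert (bs_norm (ract x (e j)) <= Kact * Ke * bs_norm x).
    { eapply Rle_trans; eauto. apply Rmult_le_compat_r; auto. apply Rmult_le_compat_l; auto. }
    apply Rle_trans with (Kact * bs_norm w * (Kact * Ke * bs_norm x)).
    + apply Rmult_le_compat_l; auto. nra.
    + right; ring.
  - intros eps Heps. destruct (comm_small c eps Heps) as [j0 Hj0]. exists j0. intros j Hj.
    rewrite norm_sub_sym; auto.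
Qed.


Lemma cochain_zero_X1 n (D : Cochain X) : is_cochain (X1 X) n D ->
  (forall a b c w, D a (lact b (ract w c)) = C0) -> forall a y, X1 X y -> D a y = C0.
Proof.
  intros HD Hg a.
  assert (Hsp : forall z, in_span (gen A X) z -> D a z = C0).
  { induction 1.
    - apply (cochain_zero_x A X (X1 X) (X1_submod A X) n D a HD).
    - destruct H as [b [c [w ->]]]. apply Hg.
    - pose proof HD as [_ [H2 _]].
      rewrite H2 by (apply span_in_closed; auto). rewrite IHin_span1, IHin_span2. ring. }
  intros y Hy.
  destruct (cochain_bound_diff A X (X1 X) (X1_submod A X) n D HD) as [K [HK Hb]].
  apply Cmod_small. intros eps Heps.
  pose proof (prod_norm_ge0 A a n) as Hpn.
  assert (Hp : 0 < eps / (K * prod_norm a n + 1)) by (apply Rdiv_lt_0_compat; nra).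
  destruct (Hy _ Hp) as [z [Hz Nz]].
  specialize (Hb a y z Hy (span_in_closed A X _ z Hz)). rewrite (Hsp z Hz) in Hb.
  replace (Csub (D a y) C0) with (D a y) in Hb by ring.
  eapply Rle_trans; [apply Hb|].
  apply Rle_trans with ((K * prod_norm a n + 1) * (eps / (K * prod_norm a n + 1))).
  - assert (0 <= K * prod_norm a n) by nra. pose proof (bs_norm_ge0 _ (bs_sub y z)). nra.
  - right. field. nra.
Qed.

Variable U : (I -> Prop) -> Prop.
Hypothesis HT : U (fun _ => True).
Hypothesis HF : ~ U (fun _ => False).
Hypothesis HS : forall A B : I -> Prop, U A -> (forall x, A x -> B x) -> U B.
Hypothesis HI : forall A B : I -> Prop, U A -> U B -> U (fun x => A x /\ B x).
Hypothesis HUlt : forall A : I -> Prop, U A \/ U (fun x => ~ A x).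
Hypothesis Htail : forall i0, U (fun i => le i0 i).

Definition TL1 := TL I U A X g1.
Definition TL2 := TL I U A X g2.

Lemma M1pos : 0 <= Kact * Ke. Proof. nra. Qed.
Lemma M2pos : 0 <= Kact * Ke * (Kact * Ke). Proof. pose proof M1pos; nra. Qed.

Lemma TL1_cochain n T : is_cochain (fun _ => True) n T -> is_cochain (fun _ => True) n (TL1 T).
Proof. apply (TL_cochain I U HT HF HS HI HUlt A X _ g1 g1_add g1_scal _ M1pos g1_bnd (fun _ _ => Logic.I)). Qed.
Lemma TL1_cocycle n T : cocycle (fun _ => True) n T -> cocycle (fun _ => True) n (TL1 T).
Proof. apply (TL_cocycle I le U HT HF HS HI HUlt Htail A X _ (submod_True A X) g1 g1_add g1_scal _ M1pos g1_bnd (fun _ _ => Logic.I) g1_R g1_L). Qed.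
Lemma TL2_cochain P n T : (P = fun _ => True) \/ (P = X1 X) -> is_cochain P n T -> is_cochain (fun _ => True) n (TL2 T).
Proof.
  intros [->| ->].
  - apply (TL_cochain I U HT HF HS HI HUlt A X _ g2 g2_add g2_scal _ M2pos g2_bnd (fun _ _ => Logic.I)).
  - apply (TL_cochain I U HT HF HS HI HUlt A X _ g2 g2_add g2_scal _ M2pos g2_bnd g2_X1).
Qed.
Lemma TL2_cocycle P n T : (P = fun _ => True) \/ (P = X1 X) -> cocycle P n T -> cocycle (fun _ => True) n (TL2 T).
Proof.
  intros [->| ->].
  - apply (TL_cocycle I le U HT HF HS HI HUlt Htail A X _ (submod_True A X) g2 g2_add g2_scal _ M2pos g2_bnd (fun _ _ => Logic.I) g2_R g2_L).
  - apply (TL_cocycle I le U HT HF HS HI HUlt Htail A X _ (X1_submod A X) g2 g2_add g2_scal _ M2pos g2_bnd g2_X1 g2_R g2_L).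
Qed.
Lemma TL2_delta_X1 n T a x : is_cochain (X1 X) n T -> delta n (TL2 T) a x = TL2 (delta n T) a x.
Proof. apply (TL_delta I le U HT HF HS HI HUlt Htail A X _ (X1_submod A X) g2 _ g2_bnd g2_X1 g2_R g2_L). Qed.

Lemma TL1_left n T a x c : is_cochain (fun _ => True) n T -> TL1 T a (ract x c) = T a (ract x c).
Proof.
  intros HTc. apply (ul_eq I U HF HS HI).
  apply (cv_tail I le U HS HI Htail (fun _ => T a (ract x c))).
  { apply convC_const; auto. }
  destruct (cochain_bound_diff A X _ (submod_True A X) n T HTc) as [K [HK Hb]].
  apply (tail_from_norm I le _ _ (fun j => bs_sub (g1 j (ract x c)) (ract x c)) (K * prod_norm a n)).
  - pose proof (prod_norm_ge0 A a n); nra.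
  - intros j. apply Hb; auto.
  - apply (small_from le _ (fun j => bs_sub (ba_mul c (e j)) c) (Kact * bs_norm x)).
    + pose proof (bs_norm_ge0 _ x); nra.
    + intros j. unfold g1. rewrite <- ract_M. rewrite <- ract_sub_r. eapply Rle_trans; [apply ract_bnd|]. lra.
    + intros eps Heps. destruct (Hbai c eps Heps) as [j0 Hj0]. exists j0. intros j Hj. apply Hj0; auto.
Qed.

Lemma TL2_TL1_right n T a x c : is_cochain (fun _ => True) n T -> TL2 T a (lact c x) = TL1 T a (lact c x).
Proof.
  intros HTc. apply (ul_eq I U HF HS HI).
  apply (cv_tail I le U HS HI Htail (fun j => T a (g1 j (lact c x)))).
  { apply (TL_conv I U HT HF HS HI HUlt A X (fun _ => True) g1 _ g1_bnd (fun _ _ => Logic.I) n); auto. }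
  destruct (cochain_bound_diff A X _ (submod_True A X) n T HTc) as [K [HK Hb]].
  apply (tail_from_norm I le _ _ (fun j => bs_sub (g2 j (lact c x)) (g1 j (lact c x))) (K * prod_norm a n)).
  - pose proof (prod_norm_ge0 A a n); nra.
  - intros j. apply Hb; auto.
  - apply (small_from le _ (fun j => bs_sub (ba_mul (e j) c) c) (Kact * (Kact * Ke * bs_norm x))).
    + pose proof (bs_norm_ge0 _ x). repeat apply Rmult_le_pos; auto.
    + intros j. unfold g1, g2. rewrite lract, <- lact_M, <- lact_sub_l.
      set (w := bs_sub (ba_mul (e j) c) c).
      eapply Rle_trans; [apply lact_bnd|]. pose proof (ract_bnd (e j) x). pose proof (HeK j).
      pose proof (bs_norm_ge0 _ (e j)). pose proof (bs_norm_ge0 _ (ract x (e j))).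
      pose proof (bs_norm_ge0 _ x). pose proof (bs_norm_ge0 _ w).
      assert (bs_norm (ract x (e j)) <= Kact * Ke * bs_norm x).
      { eapply Rle_trans; eauto. apply Rmult_le_compat_r; auto. apply Rmult_le_compat_l; auto. }
      apply Rle_trans with (Kact * bs_norm w * (Kact * Ke * bs_norm x)).
      * apply Rmult_le_compat_l; auto. nra.
      * right; ring.
    + intros eps Heps. destruct (Hbai c eps Heps) as [j0 Hj0]. exists j0. intros j Hj. apply Hj0; auto.
Qed.


Lemma closure_back m T : cocycle (fun _ => True) (S m) T ->
  strong_closure_B (X1 X) (S m) T -> strong_closure_B (fun _ => True) (S m) T.
Proof.
  intros HTcc HB. pose proof HTcc as [HTc HTd].
  set (D1 := fun a x => Cadd (Cmul (Copp C1) (TL1 T a x)) (T a x)).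
  set (D2 := fun a x => Cadd (Cmul (Copp C1) (TL2 T a x)) (TL1 T a x)).
  pose proof (TL1_cocycle _ _ HTcc) as [H1c H1d].
  pose proof (TL2_cocycle _ _ _ (or_introl eq_refl) HTcc) as [H2c H2d].
  assert (C1c : cocycle (fun _ => True) (S m) D1).
  { split. apply is_cochain_lin; auto.
    intros a x _. unfold D1. rewrite delta_lin, H1d, HTd by auto. ring. }
  assert (C2c : cocycle (fun _ => True) (S m) D2).
  { split. apply is_cochain_lin; auto.
    intros a x _. unfold D2. rewrite delta_lin, H1d, H2d by auto. ring. }
  assert (B1 : strong_closure_B (fun _ => True) (S m) D1).
  { apply (clB_left A X I le e Ke Hdir HKe HeK Hbai m D1 C1c).
    intros a x c. unfold D1. rewrite (TL1_left (S m)) by auto. ring. }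
  assert (B2 : strong_closure_B (fun _ => True) (S m) D2).
  { apply (clB_right A X I le e Ke Hdir HKe HeK Hbai m D2 C2c).
    intros a x c. unfold D2. rewrite (TL2_TL1_right (S m)) by auto. ring. }
  assert (B3 : strong_closure_B (fun _ => True) (S m) (TL2 T)).
  { destruct HB as [HTX [J [leJ [F [HdirJ [HF' Hc]]]]]].
    split; auto.
    exists J, leJ, (fun i => TL2 (F i)). split; auto. split.
    - intros i. destruct (HF' i) as [HFc [R [HRc HdR]]]. split.
      + apply (TL2_cochain (X1 X)); auto.
      + exists (TL2 R). split. apply (TL2_cochain (X1 X)); auto.
        intros a x _. rewrite TL2_delta_X1 by auto. unfold TL2, TL. f_equal.
        apply functional_extensionality; intros j. apply HdR. apply g2_X1.
    - intros a eps Heps.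
      pose proof M2pos as HM2.
      assert (Hp : 0 < eps / (Kact * Ke * (Kact * Ke) + 1)) by (apply Rdiv_lt_0_compat; lra).
      destruct (Hc a _ Hp) as [i0 Hi0]. exists i0. intros i Hi x _.
      destruct (HF' i) as [HFc _].
      eapply Rle_trans.
      + apply (TL_close I U HT HF HS HI HUlt A X (X1 X) g2 _ g2_bnd g2_X1 (S m) T (F i)); auto. lra.
      + pose proof (bs_norm_ge0 _ x).
        apply Rmult_le_compat_r; auto.
        apply Rle_trans with ((eps / (Kact * Ke * (Kact * Ke) + 1)) * (Kact * Ke * (Kact * Ke) + 1)).
        * apply Rmult_le_compat_l; lra.
        * right; field; lra. }
  apply (clB_ext A X _ (submod_True A X) (S m) (cadd (cadd D1 D2) (TL2 T))).
  - intros a x _. unfold cadd, D1, D2. ring.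
  - apply (clB_add A X _ (submod_True A X)); auto. apply (clB_add A X _ (submod_True A X)); auto.
Qed.

Lemma TL2_gen n S a b c w : is_cochain (X1 X) n S ->
  TL2 S a (lact b (ract w c)) = S a (lact b (ract w c)).
Proof.
  intros HSc. apply (ul_eq I U HF HS HI).
  apply (cv_tail I le U HS HI Htail (fun _ => S a (lact b (ract w c)))).
  { apply convC_const; auto. }
  destruct (cochain_bound_diff A X _ (X1_submod A X) n S HSc) as [K [HK Hb]].
  apply (tail_from_norm I le _ _ (fun j => bs_sub (g2 j (lact b (ract w c))) (lact b (ract w c))) (K * prod_norm a n)).
  - pose proof (prod_norm_ge0 A a n); nra.
  - intros j. apply Hb; auto. apply g2_X1. apply X1_gen.
  - intros eps Heps.
    set (C1' := Kact * Kact * (bs_norm c * Ke) * bs_norm w).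
    set (C2' := Kact * bs_norm b * (Kact * bs_norm w)).
    pose proof (bs_norm_ge0 _ c). pose proof (bs_norm_ge0 _ b). pose proof (bs_norm_ge0 _ w).
    assert (HC1 : 0 <= C1') by (unfold C1'; repeat apply Rmult_le_pos; auto).
    assert (HC2 : 0 <= C2') by (unfold C2'; repeat apply Rmult_le_pos; auto).
    assert (Hp : 0 < eps / (C1' + C2' + 1)) by (apply Rdiv_lt_0_compat; lra).
    destruct (Hbai b _ Hp) as [j1 Hj1]. destruct (Hbai c _ Hp) as [j2 Hj2].
    destruct Hdir as [_ [_ [Htr Hd]]]. destruct (Hd j1 j2) as [j0 [Hj10 Hj20]].
    exists j0. intros j Hj.
    destruct (Hj1 j (Htr _ _ _ Hj10 Hj)) as [Hb1 _]. destruct (Hj2 j (Htr _ _ _ Hj20 Hj)) as [_ Hc2].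
    unfold g2. rewrite lract, <- lact_M, <- ract_M.
    rewrite <- (sub_add_sub _ _ (lact b (ract w (ba_mul c (e j))))).
    rewrite <- lact_sub_l, <- lact_sub_r, <- ract_sub_r.
    eapply Rle_lt_trans; [apply bs_normD|].
    set (u1 := bs_sub (ba_mul (e j) b) b). set (u2 := bs_sub (ba_mul c (e j)) c).
    assert (E1 : bs_norm (lact u1 (ract w (ba_mul c (e j)))) <= C1' * bs_norm u1).
    { eapply Rle_trans; [apply lact_bnd|].
      pose proof (ract_bnd (ba_mul c (e j)) w). pose proof (ba_normM A c (e j)). pose proof (HeK j).
      pose proof (bs_norm_ge0 _ u1). pose proof (bs_norm_ge0 _ (e j)).
      pose proof (bs_norm_ge0 _ (ba_mul c (e j))). pose proof (bs_norm_ge0 _ (ract w (ba_mul c (e j)))).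
      assert (bs_norm (ba_mul c (e j)) <= bs_norm c * Ke) by (eapply Rle_trans; eauto; apply Rmult_le_compat_l; auto).
      assert (bs_norm (ract w (ba_mul c (e j))) <= Kact * (bs_norm c * Ke) * bs_norm w).
      { eapply Rle_trans; eauto. apply Rmult_le_compat_r; auto. apply Rmult_le_compat_l; auto. }
      unfold C1'. apply Rle_trans with (Kact * bs_norm u1 * (Kact * (bs_norm c * Ke) * bs_norm w)).
      - apply Rmult_le_compat_l; auto. apply Rmult_le_pos; auto.
      - right; ring. }
    assert (E2 : bs_norm (lact b (ract w u2)) <= C2' * bs_norm u2).
    { eapply Rle_trans; [apply lact_bnd|]. pose proof (ract_bnd u2 w).
      pose proof (bs_norm_ge0 _ u2).
      unfold C2'. apply Rle_trans with (Kact * bs_norm b * (Kact * bs_norm u2 * bs_norm w)).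
      - apply Rmult_le_compat_l; auto. apply Rmult_le_pos; auto.
      - right; ring. }
    assert (C1' * bs_norm u1 + C2' * bs_norm u2 <= (C1' + C2') * (eps / (C1' + C2' + 1))).
    { assert (Hu1 : bs_norm u1 < eps / (C1' + C2' + 1)) by exact Hb1.
      assert (Hu2 : bs_norm u2 < eps / (C1' + C2' + 1)) by exact Hc2.
      pose proof (bs_norm_ge0 _ u1). pose proof (bs_norm_ge0 _ u2). nra. }
    assert ((C1' + C2') * (eps / (C1' + C2' + 1)) < eps).
    { replace eps with ((C1' + C2' + 1) * (eps / (C1' + C2' + 1))) at 2 by (field; lra). nra. }
    lra.
Qed.

Lemma surj m Sx : cocycle (X1 X) (S m) Sx -> exists T, cocycle (fun _ => True) (S m) T /\
  strong_closure_B (X1 X) (S m) (csub T Sx).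
Proof.
  intros HScc. pose proof HScc as [HSc HSd].
  exists (TL2 Sx). split.
  - apply (TL2_cocycle (X1 X)); auto.
  - pose proof (TL2_cochain (X1 X) _ _ (or_intror eq_refl) HSc) as H2.
    assert (HD : is_cochain (X1 X) (S m) (csub (TL2 Sx) Sx)).
    { apply (is_cochain_ext A X _ (X1_submod A X) (S m) (fun a x => Cadd (Cmul (Copp C1) (Sx a x)) (TL2 Sx a x))).
      - intros; unfold csub, Csub; ring.
      - apply (is_cochain_lin A X (X1 X) (S m) (Copp C1) Sx (TL2 Sx) HSc).
        apply (is_cochain_weaken A X (fun _ => True) (X1 X) (S m) (TL2 Sx)); auto. }
    apply (clB_zero_on A X (X1 X)); auto.
    apply (cochain_zero_X1 (S m)); auto.
    intros a b c w. unfold csub. rewrite (TL2_gen (S m)) by auto. ring.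
Qed.
End Main.

Theorem corollary3p6 (A : BanachAlgebra) (X : BanachBimodule A)
  (hbai : has_bai A) (n : nat) (hn : (1 <= n)%nat) :
  Happ_iso (X := X) (fun _ => True) (X1 X) n.
Proof.
  destruct n as [|m]; [lia|].
  destruct hbai as [I [le [e [Ke [Hdir [HeK Hbai]]]]]].
  assert (HKe : (0 <= Ke)%R).
  { destruct Hdir as [[i0] _]. pose proof (HeK i0). pose proof (bs_norm_ge0 _ (e i0)). lra. }
  destruct (act_bounded A X) as [Kact [HKact Hact]].
  destruct (UF.ultra_exists I le Hdir) as [U [HT [HF [HS [HI [HUlt Htail]]]]]].
  exists (fun T => T). split; [|split; [|split; [|split]]].
  - intros T [HTc HTd]. split.
    + apply (is_cochain_weaken A X (fun _ => True) (X1 X)); auto.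
    + intros a x _. apply HTd; auto.
  - intros T S _ _ Heq a x _. apply Heq; auto.
  - intros T S c _ _ a x _. reflexivity.
  - intros T HTcc. split.
    + intros H. apply (clB_weaken A X (fun _ => True) (X1 X)); auto.
    + intros H. apply (closure_back A X I le e Ke Hdir HKe HeK Hbai Kact HKact Hact U HT HF HS HI HUlt Htail m); auto.
  - intros S HScc.
    apply (surj A X I le e Ke Hdir HKe HeK Hbai Kact HKact Hact U HT HF HS HI HUlt Htail m); auto.
Qed.
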